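(* Fix $a>0$ and let $q\to0^+$. Let $x_0$ be the solution of $e^{-x_0}x_0^{a}=q\,\Gamma(a)$ with $x_0\to\infty$ as $q\to0^+$, and let $x$ be the solution of $Q(a,x)=q$. Put $L=\ln x_0$ and $b=1-a$, and $$d_1=L-1,\qquad d_2=\tfrac12\bigl(3b-2bL+L^2-2L+2\bigr),$$ $$d_3=\tfrac16\bigl(24bL-11b^2-24b-6L^2+12L-12-9bL^2+6b^2L+2L^3\bigr),$$ $$d_4=\tfrac1{12}\bigl(72+36L^2+3L^4-72L+162b-168bL-12L^3+25b^3-22bL^3+36b^2L^2-12b^3L+84bL^2+120b^2-114b^2L\bigr).$$ Then for each $K\in\{1,2,3,4\}$, $$x=x_0-L+b\sum_{k=1}^{K}\frac{d_k}{x_0^k}+o\bigl(x_0^{-K}\bigr)\qquad(q\to0^+).$$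
   Context: $Q(a,x)=\frac{1}{\Gamma(a)}\int_x^\infty t^{a-1}e^{-t}\,dt$ for $a>0$, $x>0$ (the regularized upper incomplete gamma function), which has the asymptotic expansion $Q(a,x)\sim\frac{x^{a-1}e^{-x}}{\Gamma(a)}\sum_{n\ge0}\frac{(-1)^n(1-a)_n}{x^n}$ as $x\to\infty$, with $(c)_n=\Gamma(c+n)/\Gamma(c)$. *)

(* Defs.v *)
From Stdlib Require Import Reals Lra.
Open Scope R_scope.

(* Integrand of the gamma function: t^(a-1) e^(-t)  (used only for t > 0). *)
Definition gamma_integrand (a : R) (t : R) : R := Rpower t (a - 1) * exp (- t).

(* [is_Gamma a G]: G = Gamma(a) = \int_0^\infty t^(a-1) e^(-t) dt,
   as an improper Riemann integral (limit e -> 0+, T -> +infinity). *)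
Definition is_Gamma (a G : R) : Prop :=
  forall eps : R, 0 < eps ->
    exists delta M : R, 0 < delta /\
      forall e T : R, 0 < e < delta -> M <= T ->
        exists pr : Riemann_integrable (gamma_integrand a) e T,
          Rabs (RiemannInt pr - G) < eps.

(* [is_upper_gamma a x v]: v = \int_x^\infty t^(a-1) e^(-t) dt  (x > 0),
   as an improper Riemann integral (limit T -> +infinity). *)
Definition is_upper_gamma (a x v : R) : Prop :=
  forall eps : R, 0 < eps ->
    exists M : R, forall T : R, M <= T ->
      exists pr : Riemann_integrable (gamma_integrand a) x T,
        Rabs (RiemannInt pr - v) < eps.

(* [Q_eq a x q]: Q(a,x) = q, where Q(a,x) = Gamma(a,x)/Gamma(a) is the
   regularized upper incomplete gamma function. *)
Definition Q_eq (a x q : R) : Prop :=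
  exists G v : R, is_Gamma a G /\ is_upper_gamma a x v /\ q = v / G.

Definition dcoef (b L : R) (k : nat) : R :=
  match k with
  | 1%nat => L - 1
  | 2%nat => / 2 * (3 * b - 2 * b * L + L ^ 2 - 2 * L + 2)
  | 3%nat => / 6 * (24 * b * L - 11 * b ^ 2 - 24 * b - 6 * L ^ 2 + 12 * L - 12
                    - 9 * b * L ^ 2 + 6 * b ^ 2 * L + 2 * L ^ 3)
  | 4%nat => / 12 * (72 + 36 * L ^ 2 + 3 * L ^ 4 - 72 * L + 162 * b - 168 * b * L
                     - 12 * L ^ 3 + 25 * b ^ 3 - 22 * b * L ^ 3 + 36 * b ^ 2 * L ^ 2
                     - 12 * b ^ 3 * L + 84 * b * L ^ 2 + 120 * b ^ 2 - 114 * b ^ 2 * L)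
  | _ => 0
  end.

Definition approx (a x0 : R) (K : nat) : R :=
  let L := ln x0 in let b := 1 - a in
  x0 - L + b * sum_f_R0 (fun i => dcoef b L (S i) / x0 ^ (S i)) (K - 1).

(* Main.v *)
Require Import Defs.
From Stdlib Require Import Reals.
Open Scope R_scope.
From Stdlib Require Import Lra Lia.
From Coquelicot Require Import Coquelicot.
Open Scope R_scope.

Lemma ln_le_sub1 y : 0 < y -> ln y <= y - 1.
Proof. intros H. pose proof (exp_ineq1_le (ln y)) as H1. rewrite exp_ln in H1; lra. Qed.

Lemma ln_diff_bound p q : 0 < p -> 0 < q ->
  Rabs (ln p - ln q) <= Rabs (p - q) / Rmin p q.
Proof.
  intros Hp Hq.
  destruct (Rle_dec p q) as [Hpq|Hpq].
  - rewrite Rmin_left by lra.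
    assert (H1 : ln p <= ln q) by (apply ln_le; lra).
    assert (H2 : ln q - ln p <= (q - p) / p).
    { rewrite <- ln_div by lra. pose proof (ln_le_sub1 (q/p)) as H3.
      assert (q / p - 1 = (q - p) / p) by (field; lra).
      assert (0 < q / p) by (apply Rdiv_lt_0_compat; lra). lra. }
    rewrite Rabs_left1 by lra. rewrite Rabs_left1 by lra.
    replace (- (p - q)) with (q - p) by ring. lra.
  - rewrite Rmin_right by lra.
    assert (H1 : ln q <= ln p) by (apply ln_le; lra).
    assert (H2 : ln p - ln q <= (p - q) / q).
    { rewrite <- ln_div by lra. pose proof (ln_le_sub1 (p/q)) as H3.
      assert (p / q - 1 = (p - q) / q) by (field; lra).
      assert (0 < p / q) by (apply Rdiv_lt_0_compat; lra). lra. }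
    rewrite Rabs_right by lra. rewrite Rabs_right by lra. lra.
Qed.

Definition Pb (g : R -> R) := exists C m M, 0 <= C /\ 1 <= M /\
  forall y, M <= y -> Rabs (g y) <= C * (1 + ln y) ^ m.

Definition O5 (g : R -> R) := exists C m M, 0 <= C /\ 1 <= M /\
  forall y, M <= y -> Rabs (g y) <= C * (1 + ln y) ^ m * (/ y) ^ 5.

Lemma ln_nonneg y : 1 <= y -> 0 <= ln y.
Proof. intros H. rewrite <- ln_1. apply ln_le; lra. Qed.

Lemma onepl_ge1 y : 1 <= y -> 1 <= 1 + ln y.
Proof. intros H. pose proof (ln_nonneg y H). lra. Qed.

Lemma pow_ge1 t n : 1 <= t -> 1 <= t ^ n.
Proof. intros H. induction n; simpl. lra. nra. Qed.

Lemma pow_pos' t n : 0 < t -> 0 < t ^ n.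
Proof. intros; apply pow_lt; auto. Qed.

Lemma inv_le1 y : 1 <= y -> 0 < / y <= 1.
Proof. intros H. split. apply Rinv_0_lt_compat; lra.
  rewrite <- Rinv_1. apply Rinv_le_contravar; lra. Qed.

Lemma Pb_const c : Pb (fun _ => c).
Proof. exists (Rabs c), 0%nat, 1. split; [apply Rabs_pos|split; [lra|]].
  intros y Hy. simpl. lra. Qed.

Lemma Pb_L : Pb (fun y => ln y).
Proof. exists 1, 1%nat, 1. split; [lra|split;[lra|]].
  intros y Hy. pose proof (ln_nonneg y Hy). rewrite Rabs_right by lra. simpl. lra. Qed.

Lemma Pb_w : Pb (fun y => / y).
Proof. exists 1, 0%nat, 1. split; [lra|split;[lra|]].
  intros y Hy. pose proof (inv_le1 y Hy). rewrite Rabs_right by lra. simpl. lra. Qed.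

Lemma Pb_plus f g : Pb f -> Pb g -> Pb (fun y => f y + g y).
Proof.
  intros (C1&m1&M1&HC1&HM1&H1) (C2&m2&M2&HC2&HM2&H2).
  exists (C1 + C2), (m1 + m2)%nat, (Rmax M1 M2).
  split; [lra|split; [apply Rle_trans with M1; [auto|apply Rmax_l]|]].
  intros y Hy. assert (M1 <= y) by (eapply Rle_trans; [apply Rmax_l|eauto]).
  assert (M2 <= y) by (eapply Rle_trans; [apply Rmax_r|eauto]).
  specialize (H1 y H). specialize (H2 y H0).
  pose proof (onepl_ge1 y ltac:(lra)) as Ht.
  assert ((1 + ln y) ^ m1 <= (1 + ln y) ^ (m1 + m2)) by (apply Rle_pow; [lra|lia]).
  assert ((1 + ln y) ^ m2 <= (1 + ln y) ^ (m1 + m2)) by (apply Rle_pow; [lra|lia]).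
  eapply Rle_trans; [apply Rabs_triang|]. nra.
Qed.

Lemma Pb_mult f g : Pb f -> Pb g -> Pb (fun y => f y * g y).
Proof.
  intros (C1&m1&M1&HC1&HM1&H1) (C2&m2&M2&HC2&HM2&H2).
  exists (C1 * C2), (m1 + m2)%nat, (Rmax M1 M2).
  split; [nra|split; [apply Rle_trans with M1; [auto|apply Rmax_l]|]].
  intros y Hy. assert (M1 <= y) by (eapply Rle_trans; [apply Rmax_l|eauto]).
  assert (M2 <= y) by (eapply Rle_trans; [apply Rmax_r|eauto]).
  specialize (H1 y H). specialize (H2 y H0).
  rewrite Rabs_mult, pow_add.
  replace (C1 * C2 * ((1 + ln y) ^ m1 * (1 + ln y) ^ m2)) with
    ((C1 * (1 + ln y) ^ m1) * (C2 * (1 + ln y) ^ m2)) by ring.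
  apply Rmult_le_compat; auto; apply Rabs_pos.
Qed.

Lemma Pb_opp f : Pb f -> Pb (fun y => - f y).
Proof. intros (C&m&M&HC&HM&H). exists C, m, M. split; auto. split; auto.
  intros y Hy. rewrite Rabs_Ropp. auto. Qed.

Lemma Pb_minus f g : Pb f -> Pb g -> Pb (fun y => f y - g y).
Proof. intros. apply (Pb_plus f (fun y => - g y)); auto. apply Pb_opp; auto. Qed.

Lemma Pb_pow f n : Pb f -> Pb (fun y => f y ^ n).
Proof. intros H. induction n; simpl. apply Pb_const. apply (Pb_mult f (fun y => f y ^ n)); auto. Qed.

Lemma Pb_ext f g M0 : (forall y, M0 <= y -> f y = g y) -> Pb f -> Pb g.
Proof. intros E (C&m&M&HC&HM&H). exists C, m, (Rmax M M0).
  split; auto. split. eapply Rle_trans; [eauto|apply Rmax_l].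
  intros y Hy. rewrite <- E. apply H. eapply Rle_trans; [apply Rmax_l|eauto].
  eapply Rle_trans; [apply Rmax_r|eauto]. Qed.

Lemma Pb_le f g M0 : (forall y, M0 <= y -> Rabs (f y) <= Rabs (g y)) -> Pb g -> Pb f.
Proof. intros E (C&m&M&HC&HM&H). exists C, m, (Rmax M M0).
  split; auto. split. eapply Rle_trans; [eauto|apply Rmax_l].
  intros y Hy. eapply Rle_trans. apply E. eapply Rle_trans; [apply Rmax_r|eauto].
  apply H. eapply Rle_trans; [apply Rmax_l|eauto]. Qed.

Lemma O5_plus f g : O5 f -> O5 g -> O5 (fun y => f y + g y).
Proof.
  intros (C1&m1&M1&HC1&HM1&H1) (C2&m2&M2&HC2&HM2&H2).
  exists (C1 + C2), (m1 + m2)%nat, (Rmax M1 M2).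
  split; [lra|split; [apply Rle_trans with M1; [auto|apply Rmax_l]|]].
  intros y Hy. assert (M1 <= y) by (eapply Rle_trans; [apply Rmax_l|eauto]).
  assert (M2 <= y) by (eapply Rle_trans; [apply Rmax_r|eauto]).
  specialize (H1 y H). specialize (H2 y H0).
  pose proof (onepl_ge1 y ltac:(lra)) as Ht.
  assert ((1 + ln y) ^ m1 <= (1 + ln y) ^ (m1 + m2)) by (apply Rle_pow; [lra|lia]).
  assert ((1 + ln y) ^ m2 <= (1 + ln y) ^ (m1 + m2)) by (apply Rle_pow; [lra|lia]).
  assert (0 < (/ y) ^ 5) by (apply pow_lt; apply Rinv_0_lt_compat; lra).
  eapply Rle_trans; [apply Rabs_triang|].
  assert (C1 * (1 + ln y) ^ m1 * (/ y) ^ 5 <= C1 * (1 + ln y) ^ (m1+m2) * (/ y) ^ 5).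
  { apply Rmult_le_compat_r; [lra|]. apply Rmult_le_compat_l; lra. }
  assert (C2 * (1 + ln y) ^ m2 * (/ y) ^ 5 <= C2 * (1 + ln y) ^ (m1+m2) * (/ y) ^ 5).
  { apply Rmult_le_compat_r; [lra|]. apply Rmult_le_compat_l; lra. }
  nra.
Qed.

Lemma O5_opp f : O5 f -> O5 (fun y => - f y).
Proof. intros (C&m&M&HC&HM&H). exists C, m, M. split; auto. split; auto.
  intros y Hy. rewrite Rabs_Ropp. auto. Qed.

Lemma O5_minus f g : O5 f -> O5 g -> O5 (fun y => f y - g y).
Proof. intros. apply (O5_plus f (fun y => - g y)); auto. apply O5_opp; auto. Qed.

Lemma O5_mult f g : O5 f -> Pb g -> O5 (fun y => f y * g y).
Proof.
  intros (C1&m1&M1&HC1&HM1&H1) (C2&m2&M2&HC2&HM2&H2).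
  exists (C1 * C2), (m1 + m2)%nat, (Rmax M1 M2).
  split; [nra|split; [apply Rle_trans with M1; [auto|apply Rmax_l]|]].
  intros y Hy. assert (M1 <= y) by (eapply Rle_trans; [apply Rmax_l|eauto]).
  assert (M2 <= y) by (eapply Rle_trans; [apply Rmax_r|eauto]).
  specialize (H1 y H). specialize (H2 y H0).
  rewrite Rabs_mult, pow_add.
  replace (C1 * C2 * ((1 + ln y) ^ m1 * (1 + ln y) ^ m2) * (/ y) ^ 5) with
    ((C1 * (1 + ln y) ^ m1 * (/ y) ^ 5) * (C2 * (1 + ln y) ^ m2)) by ring.
  apply Rmult_le_compat; auto; apply Rabs_pos.
Qed.

Lemma O5_mult_l f g : Pb g -> O5 f -> O5 (fun y => g y * f y).
Proof. intros.
  destruct (O5_mult f g H0 H) as (C&m&M&HC&HM&HH). exists C, m, M. split; auto. split; auto.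
  intros y Hy. rewrite Rmult_comm. auto. Qed.

Lemma O5_w5 g : Pb g -> O5 (fun y => (/ y) ^ 5 * g y).
Proof. intros (C&m&M&HC&HM&H). exists C, m, M. split; auto. split; auto.
  intros y Hy. rewrite Rabs_mult. rewrite <- RPow_abs.
  rewrite Rabs_right. specialize (H y Hy).
  assert (0 < (/ y) ^ 5) by (apply pow_lt; apply Rinv_0_lt_compat; lra). nra.
  apply Rle_ge, Rlt_le, Rinv_0_lt_compat; lra. Qed.

Lemma O5_ext f g M0 : (forall y, M0 <= y -> f y = g y) -> O5 f -> O5 g.
Proof. intros E (C&m&M&HC&HM&H). exists C, m, (Rmax M M0).
  split; auto. split. eapply Rle_trans; [eauto|apply Rmax_l].
  intros y Hy. rewrite <- E. apply H. eapply Rle_trans; [apply Rmax_l|eauto].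
  eapply Rle_trans; [apply Rmax_r|eauto]. Qed.

Lemma O5_le f g M0 : (forall y, M0 <= y -> Rabs (f y) <= Rabs (g y)) -> O5 g -> O5 f.
Proof. intros E (C&m&M&HC&HM&H). exists C, m, (Rmax M M0).
  split; auto. split. eapply Rle_trans; [eauto|apply Rmax_l].
  intros y Hy. eapply Rle_trans. apply E. eapply Rle_trans; [apply Rmax_r|eauto].
  apply H. eapply Rle_trans; [apply Rmax_l|eauto]. Qed.

Lemma O5_Pb f : O5 f -> Pb f.
Proof. intros (C&m&M&HC&HM&H). exists C, m, M. split; auto. split; auto.
  intros y Hy. specialize (H y Hy). pose proof (inv_le1 y ltac:(lra)).
  assert ((/ y) ^ 5 <= 1). { rewrite <- (pow1 5). apply pow_incr. lra. }
  assert (0 <= C * (1 + ln y) ^ m).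
  { apply Rmult_le_pos; auto. apply pow_le. pose proof (onepl_ge1 y ltac:(lra)); lra. }
  nra. Qed.

Lemma O5_zero : O5 (fun _ => 0).
Proof. exists 0, 0%nat, 1. split; [lra|split;[lra|]]. intros. rewrite Rabs_R0. lra. Qed.

Lemma exp_pow_nat x k : exp x ^ k = exp (INR k * x).
Proof. induction k. simpl. rewrite Rmult_0_l, exp_0. auto.
  rewrite S_INR. simpl. rewrite IHk. rewrite <- exp_plus. f_equal. ring. Qed.

Lemma logpow_over_y m eps : 0 < eps -> exists M, 1 <= M /\
  forall y, M <= y -> (1 + ln y) ^ m * / y <= eps.
Proof.
  intros He.
  set (n := S m).
  set (K := (2 * INR n) ^ m).
  assert (HK : 0 < K) by (unfold K; apply pow_lt; unfold n; rewrite S_INR; pose proof (pos_INR m); lra).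
  exists (exp (2 * K / eps) + 1). split.
  { pose proof (exp_pos (2*K/eps)); lra. }
  intros y Hy.
  assert (Hy1 : 1 <= y) by (pose proof (exp_pos (2*K/eps)); lra).
  set (L := ln y).
  assert (HL0 : 0 <= L) by (apply ln_nonneg; auto).
  assert (Hn : 1 <= INR n) by (unfold n; rewrite S_INR; pose proof (pos_INR m); lra).
  set (t := exp (L / (2 * INR n))).
  assert (Ht1 : 1 + L / (2 * INR n) <= t) by apply exp_ineq1_le.
  assert (H0 : 0 <= L / (2 * INR n)) by (apply Rmult_le_pos; [lra| apply Rlt_le, Rinv_0_lt_compat; lra]).
  assert (Ht : 1 <= t) by lra.
  assert (H1 : 1 + L <= 2 * INR n * t).
  { assert (2 * INR n * (1 + L / (2 * INR n)) = 2 * INR n + L) by (field; lra). nra. }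
  assert (Htn : t ^ n = exp (L / 2)).
  { unfold t. rewrite exp_pow_nat. f_equal. field. lra. }
  assert (Hy2 : y = exp (L / 2) * exp (L / 2)).
  { rewrite <- exp_plus. replace (L / 2 + L / 2) with L by field. unfold L. rewrite exp_ln; lra. }
  assert (Hm : (1 + L) ^ m <= K * exp (L / 2)).
  { apply Rle_trans with ((2 * INR n * t) ^ m).
    apply pow_incr; lra. unfold K. rewrite Rpow_mult_distr. apply Rmult_le_compat_l.
    apply pow_le; lra. rewrite <- Htn. apply Rle_pow; auto. unfold n; lia. }
  assert (HE : 1 + L / 2 <= exp (L / 2)) by apply exp_ineq1_le.
  assert (HLb : 2 * K / eps <= L).
  { unfold L. rewrite <- (ln_exp (2 * K / eps)). apply ln_le. apply exp_pos. lra. }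
  assert (Hpos : 0 < exp (L / 2)) by apply exp_pos.
  rewrite Hy2. rewrite Rinv_mult.
  apply Rle_trans with (K * exp (L / 2) * (/ exp (L / 2) * / exp (L / 2))).
  apply Rmult_le_compat_r; [|auto]. apply Rlt_le, Rmult_lt_0_compat; apply Rinv_0_lt_compat; lra.
  replace (K * exp (L / 2) * (/ exp (L / 2) * / exp (L / 2))) with (K / exp (L / 2)) by (field; lra).
  apply Rle_trans with (K / (1 + L / 2)).
  apply Rmult_le_compat_l; [lra|]. apply Rinv_le_contravar; lra.
  apply Rle_trans with (K / (K / eps)).
  apply Rmult_le_compat_l; [lra|]. apply Rinv_le_contravar.
  apply Rdiv_lt_0_compat; lra. assert (L / 2 >= K / eps). { unfold Rdiv in *. lra. } lra.
  right. field. lra.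
Qed.

Lemma O5_small f : O5 f -> forall eps, 0 < eps -> exists M, 1 <= M /\
  forall y, M <= y -> Rabs (f y) <= eps * (/ y) ^ 4.
Proof.
  intros (C&m&M&HC&HM&H) eps He.
  destruct (logpow_over_y m (eps / (C + 1))) as (M1&HM1&H1).
  apply Rdiv_lt_0_compat; lra.
  exists (Rmax M M1). split. apply Rle_trans with M; [auto|apply Rmax_l].
  intros y Hy. assert (M <= y) by (eapply Rle_trans; [apply Rmax_l|eauto]).
  assert (M1 <= y) by (eapply Rle_trans; [apply Rmax_r|eauto]).
  specialize (H y H0). specialize (H1 y H2).
  eapply Rle_trans; [eauto|].
  assert (0 < (/ y) ^ 4) by (apply pow_lt; apply Rinv_0_lt_compat; lra).
  replace ((/ y) ^ 5) with ((/ y) ^ 4 * / y) by ring.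
  assert (0 <= (1 + ln y) ^ m) by (apply pow_le; pose proof (onepl_ge1 y ltac:(lra)); lra).
  assert (C * ((1 + ln y) ^ m * / y) <= (C + 1) * (eps / (C + 1))).
  { apply Rmult_le_compat; auto. apply Rmult_le_pos; auto. apply Rlt_le, Rinv_0_lt_compat; lra. lra. }
  replace ((C + 1) * (eps / (C + 1))) with eps in H5 by (field; lra).
  replace (C * (1 + ln y) ^ m * ((/ y) ^ 4 * / y)) with ((C * ((1 + ln y) ^ m * / y)) * (/ y) ^ 4) by ring.
  apply Rmult_le_compat_r; lra.
Qed.

Lemma Pb_small f : Pb f -> forall eps, 0 < eps -> exists M, 1 <= M /\
  forall y, M <= y -> Rabs (f y) * / y <= eps.
Proof.
  intros (C&m&M&HC&HM&H) eps He.
  destruct (logpow_over_y m (eps / (C + 1))) as (M1&HM1&H1).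
  apply Rdiv_lt_0_compat; lra.
  exists (Rmax M M1). split. apply Rle_trans with M; [auto|apply Rmax_l].
  intros y Hy. assert (M <= y) by (eapply Rle_trans; [apply Rmax_l|eauto]).
  assert (M1 <= y) by (eapply Rle_trans; [apply Rmax_r|eauto]).
  specialize (H y H0). specialize (H1 y H2).
  assert (0 < / y) by (apply Rinv_0_lt_compat; lra).
  assert (0 <= (1 + ln y) ^ m) by (apply pow_le; pose proof (onepl_ge1 y ltac:(lra)); lra).
  apply Rle_trans with (C * ((1 + ln y) ^ m * / y)).
  rewrite <- Rmult_assoc. apply Rmult_le_compat_r; lra.
  apply Rle_trans with ((C + 1) * (eps / (C + 1))).
  apply Rmult_le_compat; auto. apply Rmult_le_pos; auto. lra. lra.
  right. field. lra.
Qed.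

Definition ser (c : nat -> R -> R) (y : R) : R :=
  c 0%nat y + c 1%nat y * / y + c 2%nat y * (/ y) ^ 2 + c 3%nat y * (/ y) ^ 3 + c 4%nat y * (/ y) ^ 4.

Definition PbS (c : nat -> R -> R) := forall k, Pb (c k).

Definition approxS (f : R -> R) (c : nat -> R -> R) :=
  O5 (fun y => f y - ser c y) /\ PbS c.

Definition sadd (c d : nat -> R -> R) k y := c k y + d k y.
Definition sscal (r : R) (c : nat -> R -> R) k y := r * c k y.
Definition smul (c d : nat -> R -> R) k y := sum_f_R0 (fun i => c i y * d (k - i)%nat y) k.

Ltac pb := repeat first [ apply Pb_plus | apply Pb_minus | apply Pb_mult | apply Pb_opp
  | apply Pb_pow | apply Pb_L | apply Pb_w | apply Pb_const ].

Lemma Pb_sum (F : nat -> R -> R) n : (forall i, Pb (F i)) -> Pb (fun y => sum_f_R0 (fun i => F i y) n).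
Proof. intros H. induction n; simpl. apply H. apply (Pb_plus (fun y => sum_f_R0 (fun i => F i y) n)); auto. Qed.

Lemma ser_Pb c : PbS c -> Pb (ser c).
Proof. intros H. unfold ser.
  repeat apply Pb_plus; try apply Pb_mult; try apply H; try apply Pb_pow; apply Pb_w. Qed.

Lemma approxS_Pb f c : approxS f c -> Pb f.
Proof. intros [H1 H2]. apply (Pb_ext (fun y => (f y - ser c y) + ser c y) f 0).
  intros; ring. apply Pb_plus. apply O5_Pb; auto. apply ser_Pb; auto. Qed.

Lemma PbS_add c d : PbS c -> PbS d -> PbS (sadd c d).
Proof. intros H1 H2 k. unfold sadd. apply Pb_plus; auto. Qed.
Lemma PbS_scal r c : PbS c -> PbS (sscal r c).
Proof. intros H1 k. unfold sscal. apply Pb_mult; auto. apply Pb_const. Qed.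
Lemma PbS_mul c d : PbS c -> PbS d -> PbS (smul c d).
Proof. intros H1 H2 k. unfold smul. apply (Pb_sum (fun i y => c i y * d (k - i)%nat y)).
  intros i. apply Pb_mult; auto. Qed.

Lemma approxS_add f g c d : approxS f c -> approxS g d -> approxS (fun y => f y + g y) (sadd c d).
Proof. intros [H1 H2] [H3 H4]. split; [|apply PbS_add; auto].
  apply (O5_ext (fun y => (f y - ser c y) + (g y - ser d y)) _ 0).
  intros; unfold ser, sadd; ring. apply O5_plus; auto. Qed.

Lemma approxS_scal r f c : approxS f c -> approxS (fun y => r * f y) (sscal r c).
Proof. intros [H1 H2]. split; [|apply PbS_scal; auto].
  apply (O5_ext (fun y => r * (f y - ser c y)) _ 0).
  intros; unfold ser, sscal; ring. apply O5_mult_l; auto. apply Pb_const. Qed.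

Lemma ser_mul_id c d y : ser c y * ser d y - ser (smul c d) y =
  (/ y) ^ 5 * ((c 1%nat y * d 4%nat y + c 2%nat y * d 3%nat y + c 3%nat y * d 2%nat y + c 4%nat y * d 1%nat y)
   + / y * (c 2%nat y * d 4%nat y + c 3%nat y * d 3%nat y + c 4%nat y * d 2%nat y)
   + (/ y) ^ 2 * (c 3%nat y * d 4%nat y + c 4%nat y * d 3%nat y) + (/ y) ^ 3 * (c 4%nat y * d 4%nat y)).
Proof. unfold ser, smul. simpl. ring. Qed.

Lemma approxS_mul f g c d : approxS f c -> approxS g d -> approxS (fun y => f y * g y) (smul c d).
Proof.
  intros [H1 H2] [H3 H4]. split; [|apply PbS_mul; auto].
  pose proof (approxS_Pb g d (conj H3 H4)) as Hg.
  apply (O5_ext (fun y => (f y - ser c y) * g y + ser c y * (g y - ser d y) +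
     (ser c y * ser d y - ser (smul c d) y)) _ 0).
  intros; ring.
  apply O5_plus. apply O5_plus. apply O5_mult; auto. apply O5_mult_l; auto. apply ser_Pb; auto.
  eapply (O5_ext _ _ 0). intros y _. symmetry. apply ser_mul_id.
  apply O5_w5. unfold PbS in *. pb; first [apply H2 | apply H4].
Qed.

Lemma approxS_ext f g c M0 : (forall y, M0 <= y -> f y = g y) -> approxS f c -> approxS g c.
Proof. intros E [H1 H2]. split; auto. apply (O5_ext (fun y => f y - ser c y) _ M0); auto.
  intros y Hy; rewrite E; auto. Qed.

Lemma approxS_O5 f g c : O5 (fun y => f y - g y) -> approxS g c -> approxS f c.
Proof. intros H [H1 H2]. split; auto.
  apply (O5_ext (fun y => (f y - g y) + (g y - ser c y)) _ 0). intros; ring.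
  apply O5_plus; auto. Qed.

Lemma approxS_coef f c d : (forall k y, (k <= 4)%nat -> c k y = d k y) -> PbS d ->
  approxS f c -> approxS f d.
Proof. intros E Hd [H1 H2]. split; auto.
  apply (O5_ext (fun y => f y - ser c y) _ 0); auto.
  intros y _. unfold ser. rewrite !E by lia. auto. Qed.

Definition s_cst (g : R -> R) : nat -> R -> R := fun k y => match k with 0%nat => g y | _ => 0 end.
Definition s_w : nat -> R -> R := fun k y => match k with 1%nat => 1 | _ => 0 end.

Lemma approxS_cst g : Pb g -> approxS g (s_cst g).
Proof. intros H. split. apply (O5_ext (fun _ => 0) _ 0). intros; unfold ser, s_cst; simpl; ring.
  apply O5_zero. intros [|k]; simpl; auto; apply Pb_const. Qed.

Lemma approxS_w : approxS (fun y => / y) s_w.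
Proof. split. apply (O5_ext (fun _ => 0) _ 0). intros; unfold ser, s_w; simpl; ring.
  apply O5_zero. intros [|[|k]]; simpl; apply Pb_const. Qed.

Lemma approxS_zero f c : approxS f c -> (forall k y, (k <= 4)%nat -> c k y = 0) -> O5 f.
Proof. intros [H1 H2] E. apply (O5_ext (fun y => f y - ser c y) _ 0); auto.
  intros y _. unfold ser. rewrite !E by lia. ring. Qed.

Lemma abs_bnd u r : Rabs u <= r -> - r <= u <= r.
Proof. unfold Rabs; destruct Rcase_abs; lra. Qed.

Definition T4 (u : R) : R := u - u ^ 2 / 2 + u ^ 3 / 3 - u ^ 4 / 4.

Lemma ln_taylor u : Rabs u <= / 2 -> Rabs (ln (1 + u) - T4 u) <= 2 * Rabs u ^ 5.
Proof.
  intros Hu. pose proof (abs_bnd _ _ Hu) as Hu'.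
  set (g := fun t => ln (1 + t) - T4 t).
  assert (Hd : forall t, -1 < t -> is_derive g t (t ^ 4 / (1 + t))).
  { intros t Ht. unfold g, T4. auto_derive. lra. field. lra. }
  destruct (MVT_gen g 0 u (fun t => t ^ 4 / (1 + t))) as (c & Hc & Heq).
  { intros x Hx. apply Hd. cbv zeta in Hx. unfold Rmin, Rmax in Hx; destruct (Rle_dec 0 u); lra. }
  { intros x Hx. apply continuity_pt_filterlim. apply (ex_derive_continuous (K:=R_AbsRing) (V:=R_NormedModule) g).
    eexists. apply Hd. cbv zeta in Hx. unfold Rmin, Rmax in Hx; destruct (Rle_dec 0 u); lra. }
  assert (Hg0 : g 0 = 0). { unfold g, T4. rewrite Rplus_0_r, ln_1. simpl. field. }
  change (ln (1 + u) - T4 u) with (g u). rewrite <- (Rminus_0_r (g u)), <- Hg0, Heq.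
  assert (Hcb : Rabs c <= Rabs u).
  { unfold Rmin, Rmax in Hc. destruct (Rle_dec 0 u).
    rewrite !Rabs_right; lra. rewrite !Rabs_left1; lra. }
  pose proof (Rabs_pos c).
  assert (Hc1 : / 2 <= 1 + c). { pose proof (abs_bnd _ _ Hcb). lra. }
  rewrite Rminus_0_r, Rabs_mult. unfold Rdiv. rewrite Rabs_mult, <- RPow_abs.
  rewrite (Rabs_right (/ (1 + c))) by (apply Rle_ge, Rlt_le, Rinv_0_lt_compat; lra).
  assert (/ (1 + c) <= 2). { replace 2 with (/ / 2) by (field). apply Rinv_le_contravar; lra. }
  assert (Rabs c ^ 4 <= Rabs u ^ 4) by (apply pow_incr; lra).
  assert (0 <= Rabs c ^ 4) by (apply pow_le; lra).
  assert (0 < / (1 + c)) by (apply Rinv_0_lt_compat; lra).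
  replace (2 * Rabs u ^ 5) with ((Rabs u ^ 4 * 2) * Rabs u) by ring.
  apply Rmult_le_compat_r. apply Rabs_pos.
  apply Rmult_le_compat; lra.
Qed.

Lemma inv_taylor u : 1 + u <> 0 -> / (1 + u) = 1 - u + u ^ 2 - u ^ 3 + u ^ 4 - u ^ 5 / (1 + u).
Proof. intros H. field. auto. Qed.

Definition f1 b := - b.
Definition f2 b := b * (b + 1).
Definition f3 b := - (b * (b + 1) * (b + 2)).
Definition f4 b := b * (b + 1) * (b + 2) * (b + 3).
Definition f5 b := - (b * (b + 1) * (b + 2) * (b + 3) * (b + 4)).
Definition S5 b x := 1 + f1 b * / x + f2 b * (/ x) ^ 2 + f3 b * (/ x) ^ 3 + f4 b * (/ x) ^ 4.

Definition zs b y := b * sum_f_R0 (fun i => dcoef b (ln y) (S i) / y ^ (S i)) 3.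
Definition mu b y := zs b y - ln y.
Definition us b y := mu b y * / y.
Definition vs b y := / (1 + us b y).
Definition wv b y := / y * vs b y.
Definition Ss b y := S5 b (y * (1 + us b y)).
Definition rho b y := zs b y + b * ln (1 + us b y) - ln (Ss b y).

Definition zsS (b : R) : nat -> R -> R := fun k y => match k with 0%nat => 0 | _ => b * dcoef b (ln y) k end.
Definition oneS : nat -> R -> R := fun k y => match k with 0%nat => 1 | _ => 0 end.
Definition usS (b : R) : nat -> R -> R := fun k y => match k with 0%nat => 0 | 1%nat => (- 1 * ln y) | 2%nat => (- 1 * b + 1 * ln y * b) | 3%nat => (1 * b + (3/2) * b ^ 2 - 1 * ln y * b - 1 * ln y * b ^ 2 + (1/2) * ln y ^ 2 * b) | 4%nat => (- 2 * b - 4 * b ^ 2 - (11/6) * b ^ 3 + 2 * ln y * b + 4 * ln y * b ^ 2 + 1 * ln y * b ^ 3 - 1 * ln y ^ 2 * b - (3/2) * ln y ^ 2 * b ^ 2 + (1/3) * ln y ^ 3 * b) | _ => 0 end.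
Definition U2 (b : R) : nat -> R -> R := fun k y => match k with 0%nat => 0 | 1%nat => 0 | 2%nat => (1 * ln y ^ 2) | 3%nat => (2 * ln y * b - 2 * ln y ^ 2 * b) | 4%nat => (1 * b ^ 2 - 2 * ln y * b - 5 * ln y * b ^ 2 + 2 * ln y ^ 2 * b + 3 * ln y ^ 2 * b ^ 2 - 1 * ln y ^ 3 * b) | _ => 0 end.
Definition U3 (b : R) : nat -> R -> R := fun k y => match k with 0%nat => 0 | 1%nat => 0 | 2%nat => 0 | 3%nat => (- 1 * ln y ^ 3) | 4%nat => (- 3 * ln y ^ 2 * b + 3 * ln y ^ 3 * b) | _ => 0 end.
Definition U4 (b : R) : nat -> R -> R := fun k y => match k with 0%nat => 0 | 1%nat => 0 | 2%nat => 0 | 3%nat => 0 | 4%nat => (1 * ln y ^ 4) | _ => 0 end.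
Definition AS (b : R) : nat -> R -> R := fun k y => match k with 0%nat => 0 | 1%nat => (- 1 * ln y) | 2%nat => (- 1 * b + 1 * ln y * b - (1/2) * ln y ^ 2) | 3%nat => (1 * b + (3/2) * b ^ 2 - 2 * ln y * b - 1 * ln y * b ^ 2 + (3/2) * ln y ^ 2 * b - (1/3) * ln y ^ 3) | 4%nat => (- 2 * b - (9/2) * b ^ 2 - (11/6) * b ^ 3 + 3 * ln y * b + (13/2) * ln y * b ^ 2 + 1 * ln y * b ^ 3 - 3 * ln y ^ 2 * b - 3 * ln y ^ 2 * b ^ 2 + (11/6) * ln y ^ 3 * b - (1/4) * ln y ^ 4) | _ => 0 end.
Definition VS (b : R) : nat -> R -> R := fun k y => match k with 0%nat => (1) | 1%nat => (1 * ln y) | 2%nat => (1 * b - 1 * ln y * b + 1 * ln y ^ 2) | 3%nat => (- 1 * b - (3/2) * b ^ 2 + 3 * ln y * b + 1 * ln y * b ^ 2 - (5/2) * ln y ^ 2 * b + 1 * ln y ^ 3) | 4%nat => (2 * b + 5 * b ^ 2 + (11/6) * b ^ 3 - 4 * ln y * b - 9 * ln y * b ^ 2 - 1 * ln y * b ^ 3 + 6 * ln y ^ 2 * b + (9/2) * ln y ^ 2 * b ^ 2 - (13/3) * ln y ^ 3 * b + 1 * ln y ^ 4) | _ => 0 end.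
Definition WV (b : R) : nat -> R -> R := fun k y => match k with 0%nat => 0 | 1%nat => (1) | 2%nat => (1 * ln y) | 3%nat => (1 * b - 1 * ln y * b + 1 * ln y ^ 2) | 4%nat => (- 1 * b - (3/2) * b ^ 2 + 3 * ln y * b + 1 * ln y * b ^ 2 - (5/2) * ln y ^ 2 * b + 1 * ln y ^ 3) | _ => 0 end.
Definition WV2 (b : R) : nat -> R -> R := fun k y => match k with 0%nat => 0 | 1%nat => 0 | 2%nat => (1) | 3%nat => (2 * ln y) | 4%nat => (2 * b - 2 * ln y * b + 3 * ln y ^ 2) | _ => 0 end.
Definition WV3 (b : R) : nat -> R -> R := fun k y => match k with 0%nat => 0 | 1%nat => 0 | 2%nat => 0 | 3%nat => (1) | 4%nat => (3 * ln y) | _ => 0 end.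
Definition WV4 (b : R) : nat -> R -> R := fun k y => match k with 0%nat => 0 | 1%nat => 0 | 2%nat => 0 | 3%nat => 0 | 4%nat => (1) | _ => 0 end.
Definition StS (b : R) : nat -> R -> R := fun k y => match k with 0%nat => (1) | 1%nat => (- 1 * b) | 2%nat => (1 * b + 1 * b ^ 2 - 1 * ln y * b) | 3%nat => (- 2 * b - 4 * b ^ 2 - 1 * b ^ 3 + 2 * ln y * b + 3 * ln y * b ^ 2 - 1 * ln y ^ 2 * b) | 4%nat => (6 * b + 14 * b ^ 2 + (19/2) * b ^ 3 + 1 * b ^ 4 - 6 * ln y * b - 14 * ln y * b ^ 2 - 6 * ln y * b ^ 3 + 3 * ln y ^ 2 * b + (11/2) * ln y ^ 2 * b ^ 2 - 1 * ln y ^ 3 * b) | _ => 0 end.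
Definition sS (b : R) : nat -> R -> R := fun k y => match k with 0%nat => 0 | 1%nat => (- 1 * b) | 2%nat => (1 * b + 1 * b ^ 2 - 1 * ln y * b) | 3%nat => (- 2 * b - 4 * b ^ 2 - 1 * b ^ 3 + 2 * ln y * b + 3 * ln y * b ^ 2 - 1 * ln y ^ 2 * b) | 4%nat => (6 * b + 14 * b ^ 2 + (19/2) * b ^ 3 + 1 * b ^ 4 - 6 * ln y * b - 14 * ln y * b ^ 2 - 6 * ln y * b ^ 3 + 3 * ln y ^ 2 * b + (11/2) * ln y ^ 2 * b ^ 2 - 1 * ln y ^ 3 * b) | _ => 0 end.
Definition s2S (b : R) : nat -> R -> R := fun k y => match k with 0%nat => 0 | 1%nat => 0 | 2%nat => (1 * b ^ 2) | 3%nat => (- 2 * b ^ 2 - 2 * b ^ 3 + 2 * ln y * b ^ 2) | 4%nat => (5 * b ^ 2 + 10 * b ^ 3 + 3 * b ^ 4 - 6 * ln y * b ^ 2 - 8 * ln y * b ^ 3 + 3 * ln y ^ 2 * b ^ 2) | _ => 0 end.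
Definition s3S (b : R) : nat -> R -> R := fun k y => match k with 0%nat => 0 | 1%nat => 0 | 2%nat => 0 | 3%nat => (- 1 * b ^ 3) | 4%nat => (3 * b ^ 3 + 3 * b ^ 4 - 3 * ln y * b ^ 3) | _ => 0 end.
Definition s4S (b : R) : nat -> R -> R := fun k y => match k with 0%nat => 0 | 1%nat => 0 | 2%nat => 0 | 3%nat => 0 | 4%nat => (1 * b ^ 4) | _ => 0 end.
Definition LtS (b : R) : nat -> R -> R := fun k y => match k with 0%nat => 0 | 1%nat => (- 1 * b) | 2%nat => (1 * b + (1/2) * b ^ 2 - 1 * ln y * b) | 3%nat => (- 2 * b - 3 * b ^ 2 - (1/3) * b ^ 3 + 2 * ln y * b + 2 * ln y * b ^ 2 - 1 * ln y ^ 2 * b) | 4%nat => (6 * b + (23/2) * b ^ 2 + (11/2) * b ^ 3 + (1/4) * b ^ 4 - 6 * ln y * b - 11 * ln y * b ^ 2 - 3 * ln y * b ^ 3 + 3 * ln y ^ 2 * b + 4 * ln y ^ 2 * b ^ 2 - 1 * ln y ^ 3 * b) | _ => 0 end.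

Ltac pbS := let k := fresh "k" in intros k; destruct k as [|[|[|[|[|k]]]]]; cbv beta iota; pb.
Ltac coefS := let k := fresh "k" in let y := fresh "y" in let Hk := fresh "Hk" in
  intros k y Hk; destruct k as [|[|[|[|[|k]]]]]; [..|lia];
  unfold smul, sadd, sscal, s_w, s_cst, oneS, zsS, dcoef, usS, U2, U3, U4, AS, VS, WV, WV2, WV3, WV4, StS, sS, s2S, s3S, s4S, LtS, f1, f2, f3, f4;
  simpl; field.

Lemma PbS_zsS b : PbS (zsS b).
Proof. intros k; destruct k as [|[|[|[|[|k]]]]]; unfold zsS, dcoef; cbv beta iota; pb. Qed.
Lemma PbS_usS b : PbS (usS b).
Proof. unfold usS; pbS. Qed.
Lemma PbS_U2 b : PbS (U2 b).
Proof. unfold U2; pbS. Qed.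
Lemma PbS_U3 b : PbS (U3 b).
Proof. unfold U3; pbS. Qed.
Lemma PbS_U4 b : PbS (U4 b).
Proof. unfold U4; pbS. Qed.
Lemma PbS_AS b : PbS (AS b).
Proof. unfold AS; pbS. Qed.
Lemma PbS_VS b : PbS (VS b).
Proof. unfold VS; pbS. Qed.
Lemma PbS_WV b : PbS (WV b).
Proof. unfold WV; pbS. Qed.
Lemma PbS_WV2 b : PbS (WV2 b).
Proof. unfold WV2; pbS. Qed.
Lemma PbS_WV3 b : PbS (WV3 b).
Proof. unfold WV3; pbS. Qed.
Lemma PbS_WV4 b : PbS (WV4 b).
Proof. unfold WV4; pbS. Qed.
Lemma PbS_StS b : PbS (StS b).
Proof. unfold StS; pbS. Qed.
Lemma PbS_sS b : PbS (sS b).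
Proof. unfold sS; pbS. Qed.
Lemma PbS_s2S b : PbS (s2S b).
Proof. unfold s2S; pbS. Qed.
Lemma PbS_s3S b : PbS (s3S b).
Proof. unfold s3S; pbS. Qed.
Lemma PbS_s4S b : PbS (s4S b).
Proof. unfold s4S; pbS. Qed.
Lemma PbS_LtS b : PbS (LtS b).
Proof. unfold LtS; pbS. Qed.

Definition V4 (u : R) : R := 1 - u + u ^ 2 - u ^ 3 + u ^ 4.

Lemma approxS_ser c : PbS c -> approxS (ser c) c.
Proof. intros H. split; auto. apply (O5_ext (fun _ => 0) _ 0). intros; ring. apply O5_zero. Qed.

Lemma O5_mul_y h : O5 h -> Pb (fun y => h y * y).
Proof. intros (C&m&M&HC&HM&H). exists C, m, M. split; auto. split; auto.
  intros y Hy. specialize (H y Hy). rewrite Rabs_mult, (Rabs_right y) by lra.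
  assert (0 < / y <= 1) by (apply inv_le1; lra).
  assert (0 <= C * (1 + ln y) ^ m).
  { apply Rmult_le_pos; auto. apply pow_le. pose proof (onepl_ge1 y ltac:(lra)); lra. }
  apply Rle_trans with (C * (1 + ln y) ^ m * (/ y) ^ 5 * y).
  apply Rmult_le_compat_r; lra.
  replace (C * (1 + ln y) ^ m * (/ y) ^ 5 * y) with (C * (1 + ln y) ^ m * (/ y) ^ 4)
    by (field; lra).
  assert ((/ y) ^ 4 <= 1) by (rewrite <- (pow1 4); apply pow_incr; lra). nra.
Qed.

Lemma approxS_Pby f c : approxS f c -> (forall y, c 0%nat y = 0) -> Pb (fun y => f y * y).
Proof. intros [H1 H2] H0.
  apply (Pb_ext (fun y => (f y - ser c y) * y + (c 1%nat y + c 2%nat y * / y + c 3%nat y * (/ y) ^ 2 + c 4%nat y * (/ y) ^ 3)) _ 1).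
  intros y Hy. unfold ser. rewrite H0. field. lra.
  apply Pb_plus. apply O5_mul_y; auto. unfold PbS in H2. pb; apply H2.
Qed.

Lemma small_of_Pby f : Pb (fun y => f y * y) -> exists M, 1 <= M /\ forall y, M <= y -> Rabs (f y) <= / 2.
Proof. intros H. destruct (Pb_small _ H (/2)) as (M&HM&HH). lra.
  exists M. split; auto. intros y Hy. specialize (HH y Hy).
  rewrite Rabs_mult, (Rabs_right y) in HH by lra.
  replace (Rabs (f y) * y * / y) with (Rabs (f y)) in HH by (field; lra). auto. Qed.

Lemma O5_ln_taylor f c : approxS f c -> (forall y, c 0%nat y = 0) ->
  O5 (fun y => ln (1 + f y) - T4 (f y)).
Proof. intros H H0. pose proof (approxS_Pby f c H H0) as Hg.
  destruct (small_of_Pby f Hg) as (M&HM&Hs).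
  apply (O5_le _ (fun y => (/ y) ^ 5 * (2 * (f y * y) ^ 5)) M).
  intros y Hy. eapply Rle_trans. apply ln_taylor. auto.
  rewrite Rabs_mult, <- RPow_abs, Rabs_mult, <- RPow_abs, Rabs_mult.
  rewrite (Rabs_right y) by lra. rewrite (Rabs_right 2) by lra.
  rewrite (Rabs_right (/ y)) by (apply Rle_ge, Rlt_le, Rinv_0_lt_compat; lra).
  right. rewrite Rpow_mult_distr. field. lra.
  apply O5_w5. apply (Pb_mult (fun _ => 2)); [apply Pb_const|]. apply (Pb_pow (fun y => f y * y)). exact Hg.
Qed.

Lemma O5_inv_taylor f c : approxS f c -> (forall y, c 0%nat y = 0) ->
  O5 (fun y => / (1 + f y) - V4 (f y)).
Proof. intros H H0. pose proof (approxS_Pby f c H H0) as Hg.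
  destruct (small_of_Pby f Hg) as (M&HM&Hs).
  apply (O5_le _ (fun y => (/ y) ^ 5 * (2 * (f y * y) ^ 5)) M).
  intros y Hy. specialize (Hs y Hy). pose proof (abs_bnd _ _ Hs).
  assert (E : / (1 + f y) - V4 (f y) = - (f y) ^ 5 * / (1 + f y)) by (unfold V4; field; lra).
  rewrite E. rewrite Rabs_mult, Rabs_Ropp, <- RPow_abs.
  rewrite (Rabs_mult ((/ y) ^ 5)), <- (RPow_abs (/ y)), Rabs_mult, <- (RPow_abs (f y * y)), Rabs_mult.
  rewrite (Rabs_right y) by lra. rewrite (Rabs_right 2) by lra.
  rewrite (Rabs_right (/ y)) by (apply Rle_ge, Rlt_le, Rinv_0_lt_compat; lra).
  rewrite (Rabs_right (/ (1 + f y))) by (apply Rle_ge, Rlt_le, Rinv_0_lt_compat; lra).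
  assert (/ (1 + f y) <= 2). { replace 2 with (/ / 2) by field. apply Rinv_le_contravar; lra. }
  assert (0 <= Rabs (f y) ^ 5) by (apply pow_le, Rabs_pos).
  replace ((/ y) ^ 5 * (2 * (Rabs (f y) * y) ^ 5)) with (Rabs (f y) ^ 5 * 2) by (rewrite Rpow_mult_distr; field; lra).
  apply Rmult_le_compat_l; auto.
  apply O5_w5. apply (Pb_mult (fun _ => 2)); [apply Pb_const|]. apply (Pb_pow (fun y => f y * y)). exact Hg.
Qed.

Lemma approx_zs b : approxS (zs b) (zsS b).
Proof. apply (approxS_ext (ser (zsS b)) _ _ 1). intros y Hy. unfold zs, ser, zsS. simpl.
  field. lra. apply approxS_ser. apply PbS_zsS. Qed.

Lemma approx_us b : approxS (us b) (usS b).
Proof.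
  assert (H : approxS (fun y => (zs b y + - ln y) * / y) (smul (sadd (zsS b) (s_cst (fun y => - ln y))) s_w)).
  { apply approxS_mul. apply approxS_add. apply approx_zs. apply approxS_cst. pb. apply approxS_w. }
  assert (H' : approxS (us b) (smul (sadd (zsS b) (s_cst (fun y => - ln y))) s_w)).
  { refine (approxS_ext _ _ _ 0 _ H). intros; unfold us, mu; ring. }
  eapply approxS_coef; [| |apply H']. coefS. apply PbS_usS.
Qed.

Lemma usS0 b y : usS b 0%nat y = 0. Proof. reflexivity. Qed.

Lemma approx_T4us b : approxS (fun y => T4 (us b y)) (AS b).
Proof.
  pose proof (approx_us b) as H1.
  assert (H2 : approxS (fun y => us b y * us b y) (U2 b)).
  { eapply approxS_coef; [|apply PbS_U2|apply approxS_mul; apply H1]. coefS. }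
  assert (H3 : approxS (fun y => us b y * (us b y * us b y)) (U3 b)).
  { eapply approxS_coef; [|apply PbS_U3|apply approxS_mul; [apply H1|apply H2]]. coefS. }
  assert (H4 : approxS (fun y => us b y * (us b y * (us b y * us b y))) (U4 b)).
  { eapply approxS_coef; [|apply PbS_U4|apply approxS_mul; [apply H1|apply H3]]. coefS. }
  pose proof (approxS_add _ _ _ _ (approxS_add _ _ _ _ (approxS_add _ _ _ _ H1 (approxS_scal (-1/2) _ _ H2)) (approxS_scal (1/3) _ _ H3)) (approxS_scal (-1/4) _ _ H4)) as H.
  eapply approxS_coef; [| |refine (approxS_ext _ _ _ 0 _ H)].
  coefS. apply PbS_AS. intros; unfold T4; field.
Qed.

Lemma approx_U2 b : approxS (fun y => us b y * us b y) (U2 b).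
Proof. eapply approxS_coef; [| |apply approxS_mul; apply approx_us]. coefS. apply PbS_U2. Qed.
Lemma approx_U3 b : approxS (fun y => us b y * (us b y * us b y)) (U3 b).
Proof. eapply approxS_coef; [| |apply approxS_mul; [apply approx_us|apply approx_U2]]. coefS. apply PbS_U3. Qed.
Lemma approx_U4 b : approxS (fun y => us b y * (us b y * (us b y * us b y))) (U4 b).
Proof. eapply approxS_coef; [| |apply approxS_mul; [apply approx_us|apply approx_U3]]. coefS. apply PbS_U4. Qed.

Lemma approx_V4us b : approxS (fun y => V4 (us b y)) (VS b).
Proof.
  pose proof (approxS_add _ _ _ _ (approxS_add _ _ _ _ (approxS_add _ _ _ _ (approxS_add _ _ _ _
    (approxS_cst (fun _ => 1) (Pb_const 1)) (approxS_scal (-1) _ _ (approx_us b)))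
    (approx_U2 b)) (approxS_scal (-1) _ _ (approx_U3 b))) (approx_U4 b)) as H.
  assert (H' : approxS (fun y => V4 (us b y)) (sadd (sadd (sadd (sadd (s_cst (fun _ => 1)) (sscal (-1) (usS b))) (U2 b))
           (sscal (-1) (U3 b))) (U4 b))).
  { refine (approxS_ext _ _ _ 0 _ H). intros; unfold V4; ring. }
  eapply approxS_coef; [| |apply H']. coefS. apply PbS_VS.
Qed.

Lemma approx_vs b : approxS (vs b) (VS b).
Proof. apply (approxS_O5 _ (fun y => V4 (us b y))).
  apply (O5_inv_taylor (us b) (usS b)). apply approx_us. intros; reflexivity.
  apply approx_V4us. Qed.

Lemma approx_wv b : approxS (wv b) (WV b).
Proof. eapply approxS_coef; [| |apply approxS_mul; [apply approxS_w|apply approx_vs]]. coefS. apply PbS_WV. Qed.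
Lemma approx_WV2 b : approxS (fun y => wv b y * wv b y) (WV2 b).
Proof. eapply approxS_coef; [| |apply approxS_mul; apply approx_wv]. coefS. apply PbS_WV2. Qed.
Lemma approx_WV3 b : approxS (fun y => wv b y * (wv b y * wv b y)) (WV3 b).
Proof. eapply approxS_coef; [| |apply approxS_mul; [apply approx_wv|apply approx_WV2]]. coefS. apply PbS_WV3. Qed.
Lemma approx_WV4 b : approxS (fun y => wv b y * (wv b y * (wv b y * wv b y))) (WV4 b).
Proof. eapply approxS_coef; [| |apply approxS_mul; [apply approx_wv|apply approx_WV3]]. coefS. apply PbS_WV4. Qed.

Lemma us_small b : exists M, 1 <= M /\ forall y, M <= y -> Rabs (us b y) <= / 2.
Proof. apply small_of_Pby. apply (approxS_Pby _ (usS b)). apply approx_us. intros; reflexivity. Qed.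

Lemma approx_Ss b : approxS (Ss b) (StS b).
Proof.
  pose proof (approxS_add _ _ _ _ (approxS_add _ _ _ _ (approxS_add _ _ _ _ (approxS_add _ _ _ _
    (approxS_cst (fun _ => 1) (Pb_const 1)) (approxS_scal (f1 b) _ _ (approx_wv b)))
    (approxS_scal (f2 b) _ _ (approx_WV2 b))) (approxS_scal (f3 b) _ _ (approx_WV3 b)))
    (approxS_scal (f4 b) _ _ (approx_WV4 b))) as H.
  destruct (us_small b) as (M & HM & Hs).
  assert (H' : approxS (Ss b) (sadd (sadd (sadd (sadd (s_cst (fun _ => 1)) (sscal (f1 b) (WV b)))
     (sscal (f2 b) (WV2 b))) (sscal (f3 b) (WV3 b))) (sscal (f4 b) (WV4 b)))).
  { refine (approxS_ext _ _ _ M _ H). intros y Hy. specialize (Hs y Hy). pose proof (abs_bnd _ _ Hs).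
    unfold Ss, S5, wv, vs. field. split; lra. }
  eapply approxS_coef; [| |apply H']. coefS. apply PbS_StS.
Qed.

Lemma approx_sm1 b : approxS (fun y => Ss b y - 1) (sS b).
Proof.
  pose proof (approxS_add _ _ _ _ (approx_Ss b) (approxS_cst (fun _ => -1) (Pb_const (-1)))) as H.
  assert (H' : approxS (fun y => Ss b y - 1) (sadd (StS b) (s_cst (fun _ => -1)))).
  { refine (approxS_ext _ _ _ 0 _ H). intros; ring. }
  eapply approxS_coef; [| |apply H']. coefS. apply PbS_sS.
Qed.

Lemma approx_s2 b : approxS (fun y => (Ss b y - 1) * (Ss b y - 1)) (s2S b).
Proof. eapply approxS_coef; [| |apply approxS_mul; apply approx_sm1]. coefS. apply PbS_s2S. Qed.
Lemma approx_s3 b : approxS (fun y => (Ss b y - 1) * ((Ss b y - 1) * (Ss b y - 1))) (s3S b).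
Proof. eapply approxS_coef; [| |apply approxS_mul; [apply approx_sm1|apply approx_s2]]. coefS. apply PbS_s3S. Qed.
Lemma approx_s4 b : approxS (fun y => (Ss b y - 1) * ((Ss b y - 1) * ((Ss b y - 1) * (Ss b y - 1)))) (s4S b).
Proof. eapply approxS_coef; [| |apply approxS_mul; [apply approx_sm1|apply approx_s3]]. coefS. apply PbS_s4S. Qed.

Lemma approx_T4s b : approxS (fun y => T4 (Ss b y - 1)) (LtS b).
Proof.
  pose proof (approxS_add _ _ _ _ (approxS_add _ _ _ _ (approxS_add _ _ _ _ (approx_sm1 b) (approxS_scal (-1/2) _ _ (approx_s2 b))) (approxS_scal (1/3) _ _ (approx_s3 b))) (approxS_scal (-1/4) _ _ (approx_s4 b))) as H.
  assert (H' : approxS (fun y => T4 (Ss b y - 1)) (sadd (sadd (sadd (sS b) (sscal (-1/2) (s2S b))) (sscal (1/3) (s3S b))) (sscal (-1/4) (s4S b)))).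
  { refine (approxS_ext _ _ _ 0 _ H). intros; unfold T4; field. }
  eapply approxS_coef; [| |apply H']. coefS. apply PbS_LtS.
Qed.

Lemma O5_rho b : O5 (rho b).
Proof.
  assert (H1 : approxS (fun y => ln (1 + us b y)) (AS b)).
  { apply (approxS_O5 _ (fun y => T4 (us b y))). apply (O5_ln_taylor _ (usS b)).
    apply approx_us. intros; reflexivity. apply approx_T4us. }
  assert (H2 : approxS (fun y => ln (1 + (Ss b y - 1))) (LtS b)).
  { apply (approxS_O5 _ (fun y => T4 (Ss b y - 1))). apply (O5_ln_taylor _ (sS b)).
    apply approx_sm1. intros; reflexivity. apply approx_T4s. }
  pose proof (approxS_add _ _ _ _ (approx_zs b) (approxS_add _ _ _ _ (approxS_scal b _ _ H1) (approxS_scal (-1) _ _ H2))) as H.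
  assert (H' : approxS (rho b) (sadd (zsS b) (sadd (sscal b (AS b)) (sscal (-1) (LtS b))))).
  { refine (approxS_ext _ _ _ 0 _ H). intros. unfold rho. replace (1 + (Ss b y - 1)) with (Ss b y) by ring. ring. }
  apply (approxS_zero _ _ H').
  intros k y Hk; destruct k as [|[|[|[|[|k]]]]]; [..|lia];
  unfold smul, sadd, sscal, s_w, s_cst, oneS, zsS, dcoef, usS, U2, U3, U4, AS, VS, WV, WV2, WV3, WV4, StS, sS, s2S, s3S, s4S, LtS, f1, f2, f3, f4;
  simpl; field.
Qed.

Definition Fsum b := Rabs (f1 b) + 2 * Rabs (f2 b) + 3 * Rabs (f3 b) + 4 * Rabs (f4 b).

Lemma abs_le1_mul p q : Rabs p <= 1 -> Rabs q <= 1 -> Rabs (p * q) <= 1.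
Proof. intros. rewrite Rabs_mult. pose proof (Rabs_pos p); pose proof (Rabs_pos q). nra. Qed.

Lemma abs3 a b c : Rabs (a + b + c) <= Rabs a + Rabs b + Rabs c.
Proof. eapply Rle_trans; [apply Rabs_triang|]. pose proof (Rabs_triang a b). lra. Qed.
Lemma abs4 a b c d : Rabs (a + b + c + d) <= Rabs a + Rabs b + Rabs c + Rabs d.
Proof. eapply Rle_trans; [apply Rabs_triang|]. pose proof (abs3 a b c). lra. Qed.

Lemma S5_diff b x x' : 1 <= x -> 1 <= x' ->
  Rabs (S5 b x - S5 b x') <= Fsum b * Rabs (/ x - / x').
Proof.
  intros Hx Hx'. set (p := / x). set (q := / x').
  assert (Hp : Rabs p <= 1). { unfold p. pose proof (inv_le1 x Hx). rewrite Rabs_right; lra. }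
  assert (Hq : Rabs q <= 1). { unfold q. pose proof (inv_le1 x' Hx'). rewrite Rabs_right; lra. }
  assert (E : S5 b x - S5 b x' = (p - q) * (f1 b + f2 b * (p + q) + f3 b * (p * p + p * q + q * q)
     + f4 b * (p * (p * p) + p * (p * q) + p * (q * q) + q * (q * q)))).
  { unfold S5. fold p q. ring. }
  rewrite E, Rabs_mult, Rmult_comm. apply Rmult_le_compat_r. apply Rabs_pos.
  pose proof (abs_le1_mul p p Hp Hp) as Hpp. pose proof (abs_le1_mul p q Hp Hq) as Hpq.
  pose proof (abs_le1_mul q q Hq Hq) as Hqq.
  pose proof (abs_le1_mul p (p * p) Hp Hpp). pose proof (abs_le1_mul p (p * q) Hp Hpq).
  pose proof (abs_le1_mul p (q * q) Hp Hqq). pose proof (abs_le1_mul q (q * q) Hq Hqq).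
  unfold Fsum.
  eapply Rle_trans; [apply abs4|].
  rewrite !Rabs_mult.
  pose proof (Rabs_pos (f1 b)); pose proof (Rabs_pos (f2 b)); pose proof (Rabs_pos (f3 b)); pose proof (Rabs_pos (f4 b)).
  assert (Rabs (p + q) <= 2) by (eapply Rle_trans; [apply Rabs_triang|lra]).
  assert (Rabs (p * p + p * q + q * q) <= 3).
  { eapply Rle_trans; [apply abs3|]. lra. }
  assert (Rabs (p * (p * p) + p * (p * q) + p * (q * q) + q * (q * q)) <= 4).
  { eapply Rle_trans; [apply abs4|]. lra. }
  assert (Rabs (f2 b) * Rabs (p + q) <= 2 * Rabs (f2 b)) by nra.
  assert (Rabs (f3 b) * Rabs (p * p + p * q + q * q) <= 3 * Rabs (f3 b)) by nra.
  assert (Rabs (f4 b) * Rabs (p * (p * p) + p * (p * q) + p * (q * q) + q * (q * q)) <= 4 * Rabs (f4 b)) by nra.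
  lra.
Qed.

Lemma ln_abs_le1 S : / 2 <= S <= 2 -> Rabs (ln S) <= 1.
Proof. intros H. pose proof (ln_le_sub1 S ltac:(lra)).
  pose proof (ln_le_sub1 (/ S) ltac:(apply Rinv_0_lt_compat; lra)).
  rewrite ln_Rinv in H1 by lra.
  assert (/ S <= 2). { replace 2 with (/ / 2) by field. apply Rinv_le_contravar; lra. }
  apply Rabs_le; lra. Qed.

Lemma Ss_small b : exists M, 1 <= M /\ forall y, M <= y -> Rabs (Ss b y - 1) <= / 2.
Proof. apply small_of_Pby. apply (approxS_Pby _ (sS b)). apply approx_sm1. intros; reflexivity. Qed.

Ltac maxle := match goal with
  | |- ?a <= ?a => apply Rle_refl
  | |- ?a <= Rmax ?b ?c => first [apply Rle_trans with b; [maxle|apply Rmax_l]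
                                 | apply Rle_trans with c; [maxle|apply Rmax_r]] end.

Lemma Fsum_pos b : 0 <= Fsum b.
Proof. unfold Fsum. pose proof (Rabs_pos (f1 b)); pose proof (Rabs_pos (f2 b));
  pose proof (Rabs_pos (f3 b)); pose proof (Rabs_pos (f4 b)). lra. Qed.

Lemma main_det b Ct : 0 <= Ct -> forall eps, 0 < eps -> exists M, 1 <= M /\
  forall y x S th, M <= y -> 1 <= x -> S = S5 b x + th -> Rabs th <= Ct * (/ x) ^ 5 ->
  / 2 <= S5 b x -> / 2 <= S <= 2 ->
  x - y + ln y = - b * (ln x - ln y) + ln S ->
  Rabs (x - (y - ln y + zs b y)) <= eps * (/ y) ^ 4.
Proof.
  intros HCt eps Heps.
  destruct (O5_small _ (O5_rho b) (eps / 4)) as (M1 & HM1 & H1). lra.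
  destruct (us_small b) as (M2 & HM2 & H2).
  destruct (Ss_small b) as (M3 & HM3 & H3).
  destruct (Pb_small (fun y => (1 + Rabs b) * ln y + 1) ltac:(pb) (/ 2)) as (M4 & HM4 & H4). lra.
  pose proof (Fsum_pos b) as HF. set (F := Fsum b) in *.
  set (M5 := 4 * Rabs b + 16 * F + 2).
  set (M6 := 256 * Ct / eps + 1).
  exists (Rmax (Rmax (Rmax M1 M2) (Rmax M3 M4)) (Rmax M5 M6)).
  split. apply Rle_trans with M1; [auto|maxle].
  intros y x S th Hy Hx HS Hth HS5 HSb Heq.
  assert (HyM1 : M1 <= y) by (eapply Rle_trans; [|apply Hy]; maxle).
  assert (HyM2 : M2 <= y) by (eapply Rle_trans; [|apply Hy]; maxle).
  assert (HyM3 : M3 <= y) by (eapply Rle_trans; [|apply Hy]; maxle).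
  assert (HyM4 : M4 <= y) by (eapply Rle_trans; [|apply Hy]; maxle).
  assert (HyM5 : M5 <= y) by (eapply Rle_trans; [|apply Hy]; maxle).
  assert (HyM6 : M6 <= y) by (eapply Rle_trans; [|apply Hy]; maxle).
  specialize (H1 y HyM1). specialize (H2 y HyM2). specialize (H3 y HyM3). specialize (H4 y HyM4).
  pose proof (Rabs_pos b) as Hb0.
  assert (Hy2 : 2 <= y) by (unfold M5 in HyM5; lra).
  assert (Hy1 : 1 <= y) by lra.
  set (L := ln y) in *.
  assert (HL : 0 <= L) by (apply ln_nonneg; lra).
  assert (Hlx : 0 <= ln x) by (apply ln_nonneg; lra).
  assert (HlS : Rabs (ln S) <= 1) by (apply ln_abs_le1; lra).
  set (w := / y).
  assert (Hw : 0 < w) by (apply Rinv_0_lt_compat; lra).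
  assert (Hwy : w * y = 1) by (unfold w; field; lra).
  assert (Hxy : y / 2 <= x).
  { destruct (Rle_dec y x) as [Hle|Hlt]. lra.
    assert (ln x <= L) by (apply ln_le; lra).
    assert (Hbb : Rabs (b * (ln x - L)) <= Rabs b * L).
    { rewrite Rabs_mult. rewrite (Rabs_left1 (ln x - L)) by lra. apply Rmult_le_compat_l; lra. }
    pose proof (abs_bnd _ _ Hbb). pose proof (abs_bnd _ _ HlS).
    rewrite Rabs_right in H4 by (apply Rle_ge; nra).
    assert (Hg : (1 + Rabs b) * L + 1 <= y / 2).
    { apply Rmult_le_compat_r with (r := y) in H4; [|lra].
      replace ((1 + Rabs b) * ln y + 1) with ((1 + Rabs b) * L + 1) in H4 by reflexivity.
      rewrite Rmult_assoc, Rinv_l, Rmult_1_r in H4 by lra. lra. }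
    nra. }
  pose proof (abs_bnd _ _ H2) as H2'.
  set (xs := y * (1 + us b y)).
  assert (Hxs : y / 2 <= xs) by (unfold xs; nra).
  assert (Hxs_e : xs = y + zs b y - L) by (unfold xs, us, mu, L; field; lra).
  pose proof (abs_bnd _ _ H3) as H3'.
  assert (HSs : Ss b y = S5 b xs) by reflexivity.
  assert (Hln1 : ln (1 + us b y) = ln xs - L).
  { unfold xs, L. rewrite ln_mult by lra. ring. }
  set (e := x - (y - L + zs b y)).
  assert (Hxe : x - xs = e) by (unfold e; rewrite Hxs_e; ring).
  assert (Hid : e = - b * (ln x - ln xs) + (ln S - ln (S5 b x)) + (ln (S5 b x) - ln (Ss b y)) - rho b y).
  { unfold rho in *. rewrite Hln1. fold L. unfold e. lra. }
  assert (B1 : Rabs (ln x - ln xs) <= 2 * w * Rabs e).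
  { eapply Rle_trans. apply ln_diff_bound; lra. rewrite Hxe.
    assert (y / 2 <= Rmin x xs) by (apply Rmin_glb; lra).
    unfold Rdiv. rewrite Rmult_comm. apply Rmult_le_compat_r. apply Rabs_pos.
    replace (2 * w) with (/ (y / 2)) by (unfold w; field; lra).
    apply Rinv_le_contravar; lra. }
  assert (B2 : Rabs (ln S - ln (S5 b x)) <= 2 * Rabs th).
  { eapply Rle_trans. apply ln_diff_bound; lra.
    replace (S - S5 b x) with th by (rewrite HS; ring).
    assert (/ 2 <= Rmin S (S5 b x)) by (apply Rmin_glb; lra).
    assert (Hi : / Rmin S (S5 b x) <= 2). { replace 2 with (/ / 2) by field. apply Rinv_le_contravar; lra. }
    unfold Rdiv. pose proof (Rabs_pos th). nra. }
  assert (B3 : Rabs (ln (S5 b x) - ln (Ss b y)) <= 8 * F * w * w * Rabs e).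
  { eapply Rle_trans. apply ln_diff_bound; lra.
    assert (/ 2 <= Rmin (S5 b x) (Ss b y)) by (apply Rmin_glb; lra).
    apply Rle_trans with (Rabs (S5 b x - Ss b y) * 2).
    unfold Rdiv. apply Rmult_le_compat_l. apply Rabs_pos.
    replace 2 with (/ / 2) by field. apply Rinv_le_contravar; lra.
    rewrite HSs. eapply Rle_trans. apply Rmult_le_compat_r; [lra|]. apply S5_diff; lra.
    replace (/ x - / xs) with (- (x - xs) / (x * xs)) by (field; lra). rewrite Hxe.
    unfold Rdiv. rewrite Rabs_mult, Rabs_Ropp.
    assert (0 < x * xs) by nra.
    rewrite (Rabs_right (/ (x * xs))) by (apply Rle_ge, Rlt_le, Rinv_0_lt_compat; lra).
    assert (/ (x * xs) <= 4 * w * w).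
    { replace (4 * w * w) with (/ (y / 2 * (y / 2))) by (unfold w; field; lra).
      apply Rinv_le_contravar. nra. apply Rmult_le_compat; lra. }
    pose proof (Rabs_pos e). 
    assert (F * (Rabs e * / (x * xs)) <= F * (Rabs e * (4 * w * w))).
    { apply Rmult_le_compat_l; auto. apply Rmult_le_compat_l; auto. }
    change (Fsum b) with F. nra. }
  assert (B5 : Rabs th <= 32 * Ct * w ^ 5).
  { eapply Rle_trans; [apply Hth|].
    assert (/ x <= 2 * w). { replace (2 * w) with (/ (y / 2)) by (unfold w; field; lra). apply Rinv_le_contravar; lra. }
    assert (0 < / x) by (apply Rinv_0_lt_compat; lra).
    assert ((/ x) ^ 5 <= (2 * w) ^ 5) by (apply pow_incr; lra).
    replace (32 * Ct * w ^ 5) with (Ct * (2 * w) ^ 5) by ring.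
    apply Rmult_le_compat_l; auto. }
  assert (Hcoef : 2 * Rabs b * w + 8 * F * w * w <= / 2).
  { assert (w <= / 2) by (unfold w; replace (/ 2) with (/ 2) by auto; apply Rinv_le_contravar; lra).
    assert ((2 * Rabs b + 8 * F) * y <= y * y / 2) by (unfold M5 in HyM5; nra).
    assert (8 * F * w * w <= 8 * F * w) by (assert (w <= 1) by lra; assert (0 <= 8 * F * w) by nra; nra).
    assert ((2 * Rabs b + 8 * F) * w <= / 2).
    { apply Rmult_le_reg_r with y. lra. replace ((2 * Rabs b + 8 * F) * w * y) with (2 * Rabs b + 8 * F) by (rewrite Rmult_assoc, Hwy; ring).
      nra. }
    nra. }
  assert (Hsum : Rabs e <= Rabs b * Rabs (ln x - ln xs) + Rabs (ln S - ln (S5 b x)) + Rabs (ln (S5 b x) - ln (Ss b y)) + Rabs (rho b y)).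
  { rewrite Hid at 1.
    eapply Rle_trans. apply Rabs_triang. rewrite Rabs_Ropp.
    eapply Rle_trans. apply Rplus_le_compat_r. apply abs3.
    rewrite Rabs_mult, Rabs_Ropp. lra. }
  assert (He : Rabs e <= 4 * Rabs th + 2 * Rabs (rho b y)).
  { pose proof (Rabs_pos e).
    assert (Rabs b * Rabs (ln x - ln xs) <= Rabs b * (2 * w * Rabs e)) by (apply Rmult_le_compat_l; lra).
    assert ((2 * Rabs b * w + 8 * F * w * w) * Rabs e <= / 2 * Rabs e) by (apply Rmult_le_compat_r; lra).
    lra. }
  fold w.
  assert (128 * Ct * w ^ 5 <= eps / 2 * w ^ 4).
  { assert (0 < w ^ 4) by (apply pow_lt; lra).
    replace (128 * Ct * w ^ 5) with ((128 * Ct * w) * w ^ 4) by ring.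
    apply Rmult_le_compat_r; [lra|].
    apply Rmult_le_reg_r with y. lra. replace (128 * Ct * w * y) with (128 * Ct) by (rewrite Rmult_assoc, Hwy; ring).
    unfold M6 in HyM6.
    assert (H6c : 256 * Ct / eps <= y) by lra.
    apply Rmult_le_compat_r with (r := eps) in H6c; [|lra].
    replace (256 * Ct / eps * eps) with (256 * Ct) in H6c by (field; lra). lra. }
  change ((/ y) ^ 4) with (w ^ 4) in H1.
  lra.
Qed.

Definition Gf a t := exp ((a - 1) * ln t) * exp (- t).
Definition Pf a t := - (Gf a t * S5 (1 - a) t).
Definition Df a t := Gf a t - f5 (1 - a) * Gf a t * (/ t) ^ 5.

Lemma Pf_derive a t : 0 < t -> is_derive (Pf a) t (Df a t).
Proof. intros Ht. unfold Pf, Df, Gf, S5, f1, f2, f3, f4, f5.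
  auto_derive. lra. field. lra. Qed.

Lemma cont_of_derive (f : R -> R) (t : R) : ex_derive (K:=R_AbsRing) (V:=R_NormedModule) f t -> continuous (T:=R_UniformSpace) (U:=R_UniformSpace) f t.
Proof. intros H. apply (ex_derive_continuous (K:=R_AbsRing) (V:=R_NormedModule)). auto. Qed.

Lemma Gf_cont a t : 0 < t -> continuous (Gf a) t.
Proof. intros Ht. apply cont_of_derive. unfold Gf. auto_derive. lra. Qed.

Lemma Df_cont a t : 0 < t -> continuous (Df a) t.
Proof. intros Ht. apply cont_of_derive. unfold Df, Gf. auto_derive. repeat split; lra. Qed.

Lemma FTC_h a c x T : 0 < x -> x <= T ->
  is_RInt (fun t => Df a t + c * exp (- t / 2)) x T
    ((Pf a T - 2 * c * exp (- T / 2)) - (Pf a x - 2 * c * exp (- x / 2))).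
Proof.
  intros Hx HT.
  apply (is_RInt_derive (fun t => Pf a t - 2 * c * exp (- t / 2))).
  - intros t Ht. rewrite Rmin_left in Ht by lra. 
    unfold Pf, Df, Gf, S5, f1, f2, f3, f4, f5. auto_derive. lra. unfold Rdiv. field. lra.
  - intros t Ht. rewrite Rmin_left in Ht by lra. apply cont_of_derive.
    unfold Df, Gf. auto_derive. repeat split; lra.
Qed.

Lemma Gf_inv5 a t : 0 < t -> Gf a t * (/ t) ^ 5 = exp ((a - 6) * ln t - t).
Proof. intros Ht. unfold Gf.
  assert (E : / t = exp (- ln t)). { rewrite exp_Ropp, exp_ln; auto. }
  rewrite E, exp_pow_nat, <- !exp_plus. f_equal. simpl. ring. Qed.

Definition Kc a x := Rabs (f5 (1 - a)) * (Gf a x * (/ x) ^ 5 * exp (x / 2)).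

Lemma Kc_pos a x : 0 < x -> 0 <= Kc a x.
Proof. intros. unfold Kc. apply Rmult_le_pos. apply Rabs_pos.
  rewrite Gf_inv5 by auto. apply Rmult_le_pos; apply Rlt_le, exp_pos. Qed.

Lemma exp_le_mono u v : u <= v -> exp u <= exp v.
Proof. intros H. destruct (Req_dec u v). subst; lra. left; apply exp_increasing; lra. Qed.

Lemma decay_pt a x t : 1 <= x -> 2 * Rabs (a - 6) <= x -> x <= t ->
  Rabs (f5 (1 - a) * Gf a t * (/ t) ^ 5) <= Kc a x * exp (- t / 2).
Proof.
  intros Hx Ha Ht. unfold Kc.
  rewrite Rmult_assoc, Rabs_mult, Rmult_assoc. apply Rmult_le_compat_l. apply Rabs_pos.
  rewrite !Gf_inv5 by lra. rewrite Rabs_right by (apply Rle_ge, Rlt_le, exp_pos).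
  rewrite <- !exp_plus. apply exp_le_mono.
  assert (Hl : ln x <= ln t) by (apply ln_le; lra).
  assert ((a - 6) * (ln t - ln x) <= (t - x) / 2).
  { destruct (Rle_dec (a - 6) 0).
    - assert ((a - 6) * (ln t - ln x) <= 0) by nra. lra.
    - rewrite Rabs_right in Ha by lra.
      assert (ln t - ln x <= (t - x) / x).
      { rewrite <- ln_div by lra. pose proof (ln_le_sub1 (t / x) ltac:(apply Rdiv_lt_0_compat; lra)).
        replace ((t - x) / x) with (t / x - 1) by (field; lra). auto. }
      assert ((a - 6) * (ln t - ln x) <= (a - 6) * ((t - x) / x)) by (apply Rmult_le_compat_l; lra).
      assert ((a - 6) * ((t - x) / x) <= (t - x) / 2).
      { unfold Rdiv. apply Rmult_le_reg_r with x. lra.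
        replace ((a - 6) * ((t - x) * / x) * x) with ((a - 6) * (t - x)) by (field; lra).
        nra. }
      lra. }
  lra.
Qed.

Lemma exp_half_sq x : exp (x / 2) * exp (- x / 2) = 1.
Proof. rewrite <- exp_plus. replace (x / 2 + - x / 2) with 0 by field. apply exp_0. Qed.

Lemma finite_bounds a x T : 1 <= x -> 2 * Rabs (a - 6) <= x -> x <= T ->
  Rabs (RInt (Gf a) x T - (Pf a T - Pf a x)) <= 2 * Rabs (f5 (1 - a)) * Gf a x * (/ x) ^ 5.
Proof.
  intros Hx Ha HT.
  set (K := Kc a x). assert (HK : 0 <= K) by (apply Kc_pos; lra).
  assert (HexG : ex_RInt (Gf a) x T).
  { apply (ex_RInt_continuous (V:=R_CompleteNormedModule)). intros z Hz. rewrite Rmin_left in Hz by lra. apply Gf_cont. lra. }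
  pose proof (FTC_h a K x T ltac:(lra) HT) as Hp.
  pose proof (FTC_h a (- K) x T ltac:(lra) HT) as Hm.
  assert (Hup : RInt (Gf a) x T <= RInt (fun t => Df a t + K * exp (- t / 2)) x T).
  { apply RInt_le; auto. eexists; eauto.
    intros t Ht. pose proof (decay_pt a x t Hx Ha ltac:(lra)) as Hd. fold K in Hd.
    pose proof (abs_bnd _ _ Hd). unfold Df. lra. }
  assert (Hlo : RInt (fun t => Df a t + - K * exp (- t / 2)) x T <= RInt (Gf a) x T).
  { apply RInt_le; auto. eexists; eauto.
    intros t Ht. pose proof (decay_pt a x t Hx Ha ltac:(lra)) as Hd. fold K in Hd.
    pose proof (abs_bnd _ _ Hd). unfold Df. lra. }
  rewrite (is_RInt_unique _ _ _ _ Hp) in Hup. rewrite (is_RInt_unique _ _ _ _ Hm) in Hlo.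
  assert (HKe : 2 * K * exp (- x / 2) = 2 * Rabs (f5 (1 - a)) * Gf a x * (/ x) ^ 5).
  { unfold K, Kc. replace (2 * (Rabs (f5 (1 - a)) * (Gf a x * (/ x) ^ 5 * exp (x / 2))) * exp (- x / 2))
      with (2 * Rabs (f5 (1 - a)) * Gf a x * (/ x) ^ 5 * (exp (x / 2) * exp (- x / 2))) by ring.
    rewrite exp_half_sq. ring. }
  assert (0 < exp (- T / 2)) by apply exp_pos.
  assert (0 <= K * exp (- T / 2)) by (apply Rmult_le_pos; lra).
  apply Rabs_le. split; nra.
Qed.

Lemma decay_lim s : forall eps, 0 < eps -> exists T0, 1 <= T0 /\
  forall T, T0 <= T -> exp (s * ln T - T) <= eps.
Proof.
  intros eps He.
  destruct (logpow_over_y 1 (/ (2 * (Rabs s + 1)))) as (M & HM & H).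
  { apply Rinv_0_lt_compat. pose proof (Rabs_pos s). lra. }
  exists (Rmax M (2 / eps + 1)). split. apply Rle_trans with M; [auto|apply Rmax_l].
  intros T HT. assert (HTM : M <= T) by (eapply Rle_trans; [apply Rmax_l|eauto]).
  assert (HTe : 2 / eps + 1 <= T) by (eapply Rle_trans; [apply Rmax_r|eauto]).
  specialize (H T HTM). simpl in H. rewrite Rmult_1_r in H.
  assert (HT1 : 1 <= T) by lra.
  pose proof (ln_nonneg T HT1) as HL.
  pose proof (Rabs_pos s) as Hs.
  assert (Hln : ln T <= T / (2 * (Rabs s + 1))).
  { apply Rmult_le_compat_r with (r := T) in H; [|lra].
    rewrite Rmult_assoc, Rinv_l, Rmult_1_r in H by lra. unfold Rdiv. rewrite Rmult_comm. lra. }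
  assert (Hsl : s * ln T <= T / 2).
  { apply Rle_trans with (Rabs s * ln T).
    apply Rmult_le_compat_r with (r := ln T) in Hs as _; [|auto].
    pose proof (Rle_abs s). nra.
    apply Rle_trans with (Rabs s * (T / (2 * (Rabs s + 1)))). apply Rmult_le_compat_l; auto.
    unfold Rdiv. apply Rmult_le_reg_r with (2 * (Rabs s + 1)). lra.
    replace (Rabs s * (T * / (2 * (Rabs s + 1))) * (2 * (Rabs s + 1))) with (Rabs s * T) by (field; lra).
    replace (T * / 2 * (2 * (Rabs s + 1))) with (T * (Rabs s + 1)) by field. nra. }
  apply Rle_trans with (exp (- (T / 2))). apply exp_le_mono. lra.
  rewrite exp_Ropp. pose proof (exp_ineq1_le (T / 2)).
  apply Rle_trans with (/ (1 + T / 2)). apply Rinv_le_contravar; lra.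
  replace eps with (/ / eps) by (field; lra). apply Rinv_le_contravar.
  apply Rinv_0_lt_compat; lra.
  assert (2 / eps <= T - 1) by lra. unfold Rdiv in H1. lra.
Qed.

Definition C1 a := 1 + Rabs (f1 (1 - a)) + Rabs (f2 (1 - a)) + Rabs (f3 (1 - a)) + Rabs (f4 (1 - a)).

Lemma S5_bound b x : 1 <= x -> Rabs (S5 b x) <= 1 + Rabs (f1 b) + Rabs (f2 b) + Rabs (f3 b) + Rabs (f4 b).
Proof. intros Hx. unfold S5. pose proof (inv_le1 x Hx) as Hi.
  assert (Hp : forall n, Rabs ((/ x) ^ n) <= 1).
  { intros n. rewrite <- RPow_abs. rewrite Rabs_right by lra. rewrite <- (pow1 n). apply pow_incr; lra. }
  assert (Hp1 : Rabs (/ x) <= 1) by (rewrite Rabs_right; lra).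
  assert (forall c u, Rabs u <= 1 -> Rabs (c * u) <= Rabs c).
  { intros c u Hu. rewrite Rabs_mult. pose proof (Rabs_pos c). pose proof (Rabs_pos u). nra. }
  pose proof (H (f1 b) _ Hp1). pose proof (H (f2 b) _ (Hp 2%nat)). pose proof (H (f3 b) _ (Hp 3%nat)).
  pose proof (H (f4 b) _ (Hp 4%nat)).
  eapply Rle_trans. apply Rabs_triang. eapply Rle_trans. apply Rplus_le_compat_r. apply abs4.
  rewrite Rabs_R1. lra. Qed.

Lemma Gf_exp a t : 0 < t -> Gf a t = exp ((a - 1) * ln t - t).
Proof. intros. unfold Gf. rewrite <- exp_plus. f_equal; ring. Qed.

Lemma Pf_lim a : forall eps, 0 < eps -> exists T0, 1 <= T0 /\ forall T, T0 <= T -> Rabs (Pf a T) <= eps.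
Proof.
  intros eps He.
  assert (HC : 1 <= C1 a).
  { unfold C1. pose proof (Rabs_pos (f1 (1 - a))); pose proof (Rabs_pos (f2 (1 - a)));
    pose proof (Rabs_pos (f3 (1 - a))); pose proof (Rabs_pos (f4 (1 - a))). lra. }
  destruct (decay_lim (a - 1) (eps / C1 a)) as (T0 & HT0 & H). apply Rdiv_lt_0_compat; lra.
  exists T0. split; auto. intros T HT. specialize (H T HT).
  unfold Pf. rewrite Rabs_Ropp, Rabs_mult. rewrite Gf_exp by lra.
  rewrite Rabs_right by (apply Rle_ge, Rlt_le, exp_pos).
  pose proof (S5_bound (1 - a) T ltac:(lra)). fold (C1 a) in H0.
  apply Rle_trans with (eps / C1 a * C1 a).
  apply Rmult_le_compat; auto. apply Rlt_le, exp_pos. apply Rabs_pos.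
  right. field. lra.
Qed.

Lemma Gf_integrand a : Gf a = gamma_integrand a.
Proof. reflexivity. Qed.

Lemma upper_bounds a x v : 1 <= x -> 2 * Rabs (a - 6) <= x -> is_upper_gamma a x v ->
  Rabs (v - Gf a x * S5 (1 - a) x) <= 2 * Rabs (f5 (1 - a)) * Gf a x * (/ x) ^ 5.
Proof.
  intros Hx Ha H. apply Rle_plus_epsilon. intros eps He.
  destruct (H (eps / 2)) as (M & HM). lra.
  destruct (Pf_lim a (eps / 2)) as (T0 & HT0 & HP). lra.
  set (T := Rmax (Rmax M T0) x).
  destruct (HM T) as (pr & Hpr). unfold T; maxle.
  rewrite <- RInt_Reals, <- Gf_integrand in Hpr.
  assert (HxT : x <= T) by (unfold T; maxle).
  pose proof (finite_bounds a x T Hx Ha HxT) as Hf.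
  specialize (HP T ltac:(unfold T; maxle)).
  replace (v - Gf a x * S5 (1 - a) x) with (- (RInt (Gf a) x T - v) + (RInt (Gf a) x T - (Pf a T - Pf a x)) + Pf a T)
    by (unfold Pf; ring).
  eapply Rle_trans. apply abs3. rewrite Rabs_Ropp. lra.
Qed.

Lemma Gf_pos a t : 0 < Gf a t.
Proof. unfold Gf. apply Rmult_lt_0_compat; apply exp_pos. Qed.

Lemma lower_bound a x X v : 0 < x -> x <= X -> 1 <= X -> 2 * Rabs (a - 6) <= X -> is_upper_gamma a x v ->
  Gf a X * S5 (1 - a) X - 2 * Rabs (f5 (1 - a)) * Gf a X * (/ X) ^ 5 <= v.
Proof.
  intros Hx HxX HX Ha H. apply Rle_plus_epsilon. intros eps He.
  destruct (H (eps / 2)) as (M & HM). lra.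
  destruct (Pf_lim a (eps / 2)) as (T0 & HT0 & HP). lra.
  set (T := Rmax (Rmax M T0) X).
  destruct (HM T) as (pr & Hpr). unfold T; maxle.
  rewrite <- RInt_Reals, <- Gf_integrand in Hpr.
  assert (HXT : X <= T) by (unfold T; maxle).
  pose proof (finite_bounds a X T HX Ha HXT) as Hf.
  specialize (HP T ltac:(unfold T; maxle)).
  assert (Hex : forall u w, 0 < u -> u <= w -> ex_RInt (Gf a) u w).
  { intros u w Hu Huw. apply (ex_RInt_continuous (V:=R_CompleteNormedModule)). intros z Hz.
    rewrite Rmin_left in Hz by lra. apply Gf_cont. lra. }
  assert (Hch : RInt (Gf a) x X + RInt (Gf a) X T = RInt (Gf a) x T).
  { apply (RInt_Chasles (V:=R_CompleteNormedModule)); apply Hex; lra. }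
  assert (H0 : 0 <= RInt (Gf a) x X).
  { apply RInt_ge_0; auto. intros. apply Rlt_le, Gf_pos. }
  pose proof (abs_bnd _ _ Hf). pose proof (abs_bnd _ _ HP).
  apply Rabs_def2 in Hpr. unfold Pf in *. lra.
Qed.

Lemma Gamma_unique a G G' : is_Gamma a G -> is_Gamma a G' -> G = G'.
Proof.
  intros H1 H2.
  assert (forall eps, 0 < eps -> Rabs (G - G') < eps).
  { intros eps He.
    destruct (H1 (eps / 2)) as (d1 & M1 & Hd1 & HH1). lra.
    destruct (H2 (eps / 2)) as (d2 & M2 & Hd2 & HH2). lra.
    set (e := Rmin d1 d2 / 2). set (T := Rmax M1 M2).
    assert (He1 : 0 < e < d1). { unfold e. pose proof (Rmin_l d1 d2). assert (0 < Rmin d1 d2) by (apply Rmin_glb_lt; lra). lra. }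
    assert (He2 : 0 < e < d2). { unfold e. pose proof (Rmin_r d1 d2). assert (0 < Rmin d1 d2) by (apply Rmin_glb_lt; lra). lra. }
    destruct (HH1 e T He1 (Rmax_l _ _)) as (pr1 & Hp1).
    destruct (HH2 e T He2 (Rmax_r _ _)) as (pr2 & Hp2).
    rewrite (RiemannInt_P5 pr1 pr2) in Hp1.
    apply Rabs_def2 in Hp1. apply Rabs_def2 in Hp2. apply Rabs_def1; lra. }
  destruct (Req_dec G G') as [E|E]; auto.
  exfalso. specialize (H (Rabs (G - G'))). 
  assert (0 < Rabs (G - G')) by (apply Rabs_pos_lt; lra). specialize (H H0). lra.
Qed.

Lemma S5_near1 b x : 1 <= x -> Rabs (S5 b x - 1) <= (Rabs (f1 b) + Rabs (f2 b) + Rabs (f3 b) + Rabs (f4 b)) * / x.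
Proof. intros Hx. unfold S5. pose proof (inv_le1 x Hx) as Hi.
  assert (Hp : forall n, Rabs ((/ x) ^ S n) <= / x).
  { intros n. rewrite <- RPow_abs. rewrite Rabs_right by lra. simpl.
    assert ((/ x) ^ n <= 1) by (rewrite <- (pow1 n); apply pow_incr; lra). nra. }
  assert (forall c u, Rabs u <= / x -> Rabs (c * u) <= Rabs c * / x).
  { intros c u Hu. rewrite Rabs_mult. apply Rmult_le_compat_l; auto. apply Rabs_pos. }
  pose proof (H (f1 b) (/ x) ltac:(rewrite Rabs_right; lra)). pose proof (H (f2 b) _ (Hp 1%nat)). pose proof (H (f3 b) _ (Hp 2%nat)).
  pose proof (H (f4 b) _ (Hp 3%nat)).
  replace (1 + f1 b * / x + f2 b * (/ x) ^ 2 + f3 b * (/ x) ^ 3 + f4 b * (/ x) ^ 4 - 1)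
    with (f1 b * / x + f2 b * (/ x) ^ 2 + f3 b * (/ x) ^ 3 + f4 b * (/ x) ^ 4) by ring.
  eapply Rle_trans. apply abs4. lra. Qed.

Lemma approx4_eq a y : approx a y 4 = y - ln y + zs (1 - a) y.
Proof. reflexivity. Qed.

Lemma red_gen (h : R -> R) (g : R -> R) K : Pb h -> (forall y, 1 <= y -> g y = (/ y) ^ K * (h y * / y)) ->
  forall eps, 0 < eps -> exists M, 1 <= M /\ forall y, M <= y -> Rabs (g y) <= eps * (/ y) ^ K.
Proof.
  intros Hh E eps He. destruct (Pb_small h Hh eps He) as (M & HM & H).
  exists M. split; auto. intros y Hy. rewrite E by lra. rewrite Rabs_mult.
  rewrite <- RPow_abs. rewrite (Rabs_right (/ y)) by (apply Rle_ge, Rlt_le, Rinv_0_lt_compat; lra).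
  rewrite Rabs_mult, (Rabs_right (/ y)) by (apply Rle_ge, Rlt_le, Rinv_0_lt_compat; lra).
  rewrite Rmult_comm. apply Rmult_le_compat_r. apply pow_le, Rlt_le, Rinv_0_lt_compat; lra. apply H; auto. Qed.

Lemma reduction a K : (1 <= K <= 4)%nat -> forall eps, 0 < eps -> exists M, 1 <= M /\
  forall y, M <= y -> Rabs (approx a y 4 - approx a y K) <= eps * (/ y) ^ K.
Proof.
  intros HK. set (b := 1 - a).
  destruct K as [|[|[|[|[|K]]]]]; try lia.
  - apply (red_gen (fun y => b * (dcoef b (ln y) 2 + dcoef b (ln y) 3 * / y + dcoef b (ln y) 4 * (/ y) ^ 2))).
    unfold dcoef; pb. intros y Hy. unfold approx. simpl. fold b. field. lra.
  - apply (red_gen (fun y => b * (dcoef b (ln y) 3 + dcoef b (ln y) 4 * / y))).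
    unfold dcoef; pb. intros y Hy. unfold approx. simpl. fold b. field. lra.
  - apply (red_gen (fun y => b * dcoef b (ln y) 4)).
    unfold dcoef; pb. intros y Hy. unfold approx. simpl. fold b. field. lra.
  - apply (red_gen (fun y => 0)). pb. intros y Hy. ring.
Qed.

Theorem mainTheorem6 (a G q1 : R) (x0 x : R -> R) (K : nat) :
  0 < a ->
  is_Gamma a G ->
  0 < q1 ->
  (forall q, 0 < q < q1 -> exp (- x0 q) * Rpower (x0 q) a = q * G) ->
  (forall M, exists delta, 0 < delta /\ forall q, 0 < q < delta -> M < x0 q) ->
  (forall q, 0 < q < q1 -> 0 < x q /\ Q_eq a (x q) q) ->
  (1 <= K <= 4)%nat ->
  forall eps, 0 < eps ->
    exists delta, 0 < delta /\
      forall q, 0 < q < delta ->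
        Rabs (x q - approx a (x0 q) K) <= eps / Rabs (x0 q ^ K).
Proof.
  intros Ha HG Hq1 Hx0eq Hx0inf Hx HK eps Heps.
  set (b := 1 - a).
  set (Ct := 2 * Rabs (f5 b)).
  assert (HCt : 0 <= Ct) by (unfold Ct; pose proof (Rabs_pos (f5 b)); lra).
  set (Cf := Rabs (f1 b) + Rabs (f2 b) + Rabs (f3 b) + Rabs (f4 b)).
  assert (HCf : 0 <= Cf).
  { unfold Cf. pose proof (Rabs_pos (f1 b)); pose proof (Rabs_pos (f2 b));
    pose proof (Rabs_pos (f3 b)); pose proof (Rabs_pos (f4 b)). lra. }
  set (X1 := Rmax (Rmax 2 (2 * Rabs (a - 6))) (4 * Cf + 4 * Ct)).
  assert (HX2 : 2 <= X1) by (unfold X1; maxle).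
  assert (HXa : 2 * Rabs (a - 6) <= X1) by (unfold X1; maxle).
  assert (HXc : 4 * Cf + 4 * Ct <= X1) by (unfold X1; maxle).
  assert (Hgood : forall t, X1 <= t -> Rabs (S5 b t - 1) <= / 4 /\ Ct * (/ t) ^ 5 <= / 4).
  { intros t Ht. pose proof (inv_le1 t ltac:(lra)) as Hi.
    assert (Hti : t * / t = 1) by (field; lra).
    split.
    - eapply Rle_trans. apply S5_near1. lra. fold Cf.
      apply Rmult_le_reg_r with t. lra. rewrite Rmult_assoc, Rinv_l, Rmult_1_r by lra. lra.
    - assert ((/ t) ^ 5 <= / t).
      { replace ((/ t) ^ 5) with (/ t * (/ t) ^ 4) by ring.
        assert ((/ t) ^ 4 <= 1) by (rewrite <- (pow1 4); apply pow_incr; lra). nra. }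
      apply Rle_trans with (Ct * / t). apply Rmult_le_compat_l; auto.
      apply Rmult_le_reg_r with t. lra. rewrite Rmult_assoc, Rinv_l, Rmult_1_r by lra. lra. }
  set (m := Gf a X1 * S5 b X1 - 2 * Rabs (f5 b) * Gf a X1 * (/ X1) ^ 5).
  assert (Hm : 0 < m).
  { destruct (Hgood X1 (Rle_refl _)) as [H1 H2]. pose proof (abs_bnd _ _ H1).
    pose proof (Gf_pos a X1).
    replace m with (Gf a X1 * (S5 b X1 - Ct * (/ X1) ^ 5)) by (unfold m, Ct; ring).
    apply Rmult_lt_0_compat; lra. }
  destruct (decay_lim a (m / 2)) as (T0 & HT0 & Hdec). lra.
  destruct (main_det b Ct HCt (eps / 2)) as (M1 & HM1 & Hmain). lra.
  destruct (reduction a K HK (eps / 2)) as (M2 & HM2 & Hred). lra.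
  destruct (Hx0inf (Rmax (Rmax T0 M1) M2)) as (d & Hd & Hdx).
  exists (Rmin d q1). split. apply Rmin_glb_lt; lra.
  intros q Hq.
  assert (Hqd : 0 < q < d) by (pose proof (Rmin_l d q1); lra).
  assert (Hqq : 0 < q < q1) by (pose proof (Rmin_r d q1); lra).
  specialize (Hdx q Hqd). set (y := x0 q) in *.
  assert (HyT0 : T0 <= y) by (apply Rlt_le; eapply Rle_lt_trans; [|apply Hdx]; maxle).
  assert (HyM1 : M1 <= y) by (apply Rlt_le; eapply Rle_lt_trans; [|apply Hdx]; maxle).
  assert (HyM2 : M2 <= y) by (apply Rlt_le; eapply Rle_lt_trans; [|apply Hdx]; maxle).
  assert (Hy1 : 1 <= y) by lra.
  destruct (Hx q Hqq) as (Hxpos & G' & v & HG' & Hv & Hqv).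
  rewrite <- (Gamma_unique a G G' HG HG') in Hqv.
  assert (HG0 : G <> 0).
  { intros E. rewrite E in Hqv. unfold Rdiv in Hqv. rewrite Rinv_0, Rmult_0_r in Hqv. lra. }
  assert (Hvq : v = q * G) by (rewrite Hqv; field; auto).
  specialize (Hx0eq q Hqq). fold y in Hx0eq.
  assert (Hvy : v = exp (a * ln y - y)).
  { rewrite Hvq, <- Hx0eq. unfold Rpower. rewrite <- exp_plus. f_equal. ring. }
  assert (Hvsmall : v <= m / 2) by (rewrite Hvy; apply Hdec; auto).
  set (xx := x q) in *.
  assert (HxX1 : X1 <= xx).
  { destruct (Rle_dec X1 xx) as [Hle|Hlt]; auto. exfalso.
    pose proof (lower_bound a xx X1 v Hxpos ltac:(lra) ltac:(lra) HXa Hv). fold b m in H. lra. }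
  pose proof (upper_bounds a xx v ltac:(lra) ltac:(lra) Hv) as Hub. fold b in Hub.
  pose proof (Gf_pos a xx) as HGx.
  set (S := v / Gf a xx). set (th := S - S5 b xx).
  assert (Hth : Rabs th <= Ct * (/ xx) ^ 5).
  { replace th with ((v - Gf a xx * S5 b xx) * / Gf a xx) by (unfold th, S; field; lra).
    rewrite Rabs_mult, (Rabs_right (/ Gf a xx)) by (apply Rle_ge, Rlt_le, Rinv_0_lt_compat; lra).
    apply Rmult_le_reg_r with (Gf a xx). lra.
    rewrite Rmult_assoc, Rinv_l, Rmult_1_r by lra. unfold Ct. lra. }
  destruct (Hgood xx HxX1) as [Hg1 Hg2]. pose proof (abs_bnd _ _ Hg1). pose proof (abs_bnd _ _ Hth).
  assert (HSth : S = S5 b xx + th) by (unfold th; ring).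
  assert (HSpos : / 2 <= S <= 2) by lra.
  assert (Hlog : xx - y + ln y = - b * (ln xx - ln y) + ln S).
  { assert (E : v = Gf a xx * S) by (unfold S; field; lra).
    assert (E2 : ln v = (a - 1) * ln xx - xx + ln S).
    { rewrite E, ln_mult by lra. rewrite Gf_exp by lra. rewrite ln_exp. ring. }
    rewrite Hvy, ln_exp in E2. unfold b. lra. }
  specialize (Hmain y xx S th HyM1 ltac:(lra) HSth Hth ltac:(lra) HSpos Hlog).
  specialize (Hred y HyM2).
  rewrite approx4_eq in Hred. fold b in Hred.
  assert (Hpow : (/ y) ^ 4 <= (/ y) ^ K).
  { pose proof (inv_le1 y Hy1). replace 4%nat with (K + (4 - K))%nat by lia. rewrite pow_add.
    assert ((/ y) ^ (4 - K) <= 1) by (rewrite <- (pow1 (4 - K)); apply pow_incr; lra).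
    assert (0 <= (/ y) ^ K) by (apply pow_le; lra). nra. }
  assert (Hfin : eps / Rabs (y ^ K) = eps * (/ y) ^ K).
  { rewrite Rabs_right by (apply Rle_ge, pow_le; lra). rewrite pow_inv. reflexivity. }
  rewrite Hfin.
  replace (xx - approx a y K) with ((xx - (y - ln y + zs b y)) + ((y - ln y + zs b y) - approx a y K)) by ring.
  assert (eps / 2 * (/ y) ^ 4 <= eps / 2 * (/ y) ^ K) by (apply Rmult_le_compat_l; lra).
  eapply Rle_trans. apply Rabs_triang. lra.
Qed.
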